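(* Let $g_4(a,b,c,d)=S^4_3+3S^4_{1,1,1}-T^4_{2,1}$. Then $g_4(a^2,b^2,c^2,d^2)\in\mathcal{E}(\mathcal{P}_{4,6})\setminus\Sigma_{4,6}$, and $g_4\in\mathcal{E}(\mathcal{P}^+_{4,3})$.
   Context: Variables $a,b,c,d$ (also $x_1,\dots,x_4$). $S^4_3=\sum_i x_i^3$, $T^4_{2,1}=\sum_{i}x_i^2\sum_{j\ne i}x_j$, $S^4_{1,1,1}=bcd+acd+abd+abc$. $\mathcal{P}_{4,6}$ is the cone of real homogeneous sextic forms in $a,b,c,d$ that are nonnegative on $\mathbb{R}^4$, $\Sigma_{4,6}\subset\mathcal{P}_{4,6}$ the cone of sums of squares of real cubic forms. $\mathcal{P}^+_{4,3}$ is the cone of all real homogeneous cubic forms in $a,b,c,d$ nonnegative on $\mathbb{R}_{\ge0}^4$. For a closed convex cone $\mathcal{P}$, $f\in\mathcal{P}\setminus\{0\}$ is extremal if $f=g+h$ with $g,h\in\mathcal{P}$ forces $g,h\in\mathbb{R}_{\ge0}f$; $\mathcal{E}(\mathcal{P})$ is the set of extremal elements. *)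

(* Defs.v *)
From mathcomp Require Import all_boot all_algebra.
From mathcomp Require Import reals.
From mathcomp Require Import mpoly.
Set Implicit Arguments. Unset Strict Implicit. Unset Printing Implicit Defensive.
Import GRing.Theory Num.Theory.
Local Open Scope ring_scope.

Section Forms.
Variable R : realType.
Local Notation P := {mpoly R[4]}.

Definition S3 : P := \sum_(i < 4) 'X_i ^+ 3.
Definition T21 : P := \sum_(i < 4) ('X_i ^+ 2 * \sum_(j < 4 | j != i) 'X_j).
Definition S111 : P := \sum_(i < 4) \prod_(j < 4 | j != i) 'X_j.

Definition g4 : P := S3 + 3%:R *: S111 - T21.

Definition g4sq : P := comp_mpoly [tuple 'X_i ^+ 2 | i < 4] g4.

Definition P46 (p : P) : Prop :=
  p \is 6.-homog /\ forall x : 'I_4 -> R, 0 <= p.@[x].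

Definition Sigma46 (p : P) : Prop :=
  exists s : seq P, all (fun q => q \is 3.-homog) s /\ p = \sum_(q <- s) q ^+ 2.

Definition Pplus43 (p : P) : Prop :=
  p \is 3.-homog /\ forall x : 'I_4 -> R, (forall i, 0 <= x i) -> 0 <= p.@[x].

Definition extremal (C : P -> Prop) (f : P) : Prop :=
  C f /\ f != 0 /\
  forall g h : P, C g -> C h -> f = g + h ->
    (exists c : R, 0 <= c /\ g = c *: f) /\ (exists c : R, 0 <= c /\ h = c *: f).

End Forms.

(* Submission.v *)
From Stdlib Require Import ZArith.
Require Import Defs.
From mathcomp Require Import all_boot all_order all_algebra.
From mathcomp Require Import reals.
From mathcomp Require Import mpoly.
From mathcomp Require Import ring lra.
From mathcomp Require Import ssrZ.
Import ssrZ.Instances.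
Set Implicit Arguments. Unset Strict Implicit. Unset Printing Implicit Defensive.
Import Order.TTheory GRing.Theory Num.Theory.
Local Open Scope ring_scope.

Local Open Scope ring_scope.

Section Infra.
Variable R : realType.
Local Notation P := {mpoly R[4]}.

Definition o0 : 'I_4 := @Ordinal 4 0 isT.
Definition o1 : 'I_4 := @Ordinal 4 1 isT.
Definition o2 : 'I_4 := @Ordinal 4 2 isT.
Definition o3 : 'I_4 := @Ordinal 4 3 isT.

Definition quad := (nat * nat * nat * nat)%type.
Definition mk (q : quad) : 'X_{1..4} :=
  [multinom [tuple q.1.1.1; q.1.1.2; q.1.2; q.2]].

Lemma mk0 q : mk q o0 = q.1.1.1. Proof. by []. Qed.
Lemma mk1 q : mk q o1 = q.1.1.2. Proof. by []. Qed.
Lemma mk2 q : mk q o2 = q.1.2. Proof. by []. Qed.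
Lemma mk3 q : mk q o3 = q.2. Proof. by []. Qed.

Lemma ord4_cases (j : 'I_4) : [\/ j = o0, j = o1, j = o2 | j = o3].
Proof.
case: j => [[|[|[|[|k]]]] Hk].
- by constructor 1; apply/val_inj.
- by constructor 2; apply/val_inj.
- by constructor 3; apply/val_inj.
- by constructor 4; apply/val_inj.
- by [].
Qed.

Lemma mk_of (m : 'X_{1..4}) : m = mk (m o0, m o1, m o2, m o3).
Proof.
apply/mnmP => j; case: (ord4_cases j) => ->; by [].
Qed.

Lemma mk_inj : injective mk.
Proof.
move=> [[[a b] c] d] [[[a' b'] c'] d'] E.
have h0 := congr1 (fun m : 'X_{1..4} => m o0) E.
have h1 := congr1 (fun m : 'X_{1..4} => m o1) E.
have h2 := congr1 (fun m : 'X_{1..4} => m o2) E.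
have h3 := congr1 (fun m : 'X_{1..4} => m o3) E.
rewrite !mk0 in h0; rewrite !mk1 in h1; rewrite !mk2 in h2; rewrite !mk3 in h3.
by move: h0 h1 h2 h3 => /= -> -> -> ->.
Qed.

Lemma mdeg_mk q : mdeg (mk q) = (q.1.1.1 + q.1.1.2 + q.1.2 + q.2)%N.
Proof.
rewrite mdegE !big_ord_recr big_ord0 /=.
by rewrite add0n -!addnA.
Qed.

Definition monoq (q : quad) (x : 'I_4 -> R) : R :=
  x o0 ^+ q.1.1.1 * x o1 ^+ q.1.1.2 * x o2 ^+ q.1.2 * x o3 ^+ q.2.

Lemma big4 (T : Type) (idx : T) (op : Monoid.law idx) (F : 'I_4 -> T) :
  \big[op/idx]_(i < 4) F i = op (op (op (F o0) (F o1)) (F o2)) (F o3).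
Proof.
rewrite !big_ord_recr big_ord0 /= Monoid.mul1m.
have -> : widen_ord (leqnSn 3) (widen_ord (leqnSn 2) (widen_ord (leqnSn 1) ord_max)) = o0 by apply: val_inj.
have -> : widen_ord (leqnSn 3) (widen_ord (leqnSn 2) ord_max) = o1 by apply: val_inj.
have -> : widen_ord (leqnSn 3) ord_max = o2 by apply: val_inj.
have -> : (ord_max : 'I_4) = o3 by apply: val_inj.
done.
Qed.

Lemma mevalX_mk x q : ('X_[mk q] : P).@[x] = monoq q x.
Proof. by rewrite mevalX big4. Qed.


Definition Lgen (d : nat) : seq quad :=
  flatten [seq flatten [seq [seq (a, b, c, (d - a - b - c)%N) | c <- iota 0 (d - a - b).+1]
                         | b <- iota 0 (d - a).+1] | a <- iota 0 d.+1].

Lemma Lgen_complete d a b c e : (a + b + c + e)%N = d -> (a, b, c, e) \in Lgen d.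
Proof.
move=> H; apply/flattenP.
exists (flatten [seq [seq (a, b, c0, (d - a - b - c0)%N) | c0 <- iota 0 (d - a - b).+1]
                         | b <- iota 0 (d - a).+1]).
  apply/mapP; exists a => //; rewrite mem_iota; apply/andP; split => //.
  by rewrite add0n ltnS -H -!addnA leq_addr.
apply/flattenP.
exists [seq (a, b, c0, (d - a - b - c0)%N) | c0 <- iota 0 (d - a - b).+1].
  apply/mapP; exists b => //; rewrite mem_iota add0n ltnS -H.
  by rewrite -!addnA addKn leq_addr.
apply/mapP; exists c.
  by rewrite mem_iota add0n ltnS -H -!addnA addKn addKn leq_addr.
by rewrite -H -!addnA addKn addKn addKn.
Qed.

Definition cf (p : P) (q : quad) : R := p@_(mk q).

Lemma big_sub_uniq (T : eqType) (s1 s2 : seq T) (F : T -> R) :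
  uniq s1 -> uniq s2 -> {subset s1 <= s2} ->
  (forall m, m \in s2 -> m \notin s1 -> F m = 0) ->
  \sum_(m <- s1) F m = \sum_(m <- s2) F m.
Proof.
move=> u1 u2 sub z.
rewrite [RHS](bigID (fun m => m \in s1)) /=.
rewrite [X in _ = _ + X]big_seq_cond [X in _ = _ + X]big1 ?addr0; last first.
  by move=> m /andP [m2 m1]; apply: z.
rewrite -[RHS]big_filter; apply: perm_big.
apply: uniq_perm => //; first exact: filter_uniq.
by move=> m; rewrite mem_filter; case E: (m \in s1) => //=; rewrite sub.
Qed.

Lemma homog_mdeg (p : P) d m : p \is d.-homog -> m \in msupp p -> mdeg m = d.
Proof. by move/dhomogP => H /H. Qed.

Lemma homog_eval (p : P) d x : uniq (Lgen d) -> p \is d.-homog ->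
  p.@[x] = \sum_(q <- Lgen d) cf p q * monoq q x.
Proof.
move=> uL hp; rewrite mevalE.
rewrite (eq_bigr (fun q => cf p q * monoq q x)); last by [].
have -> : \sum_(q <- Lgen d) cf p q * monoq q x =
   \sum_(m <- map mk (Lgen d)) p@_m * \prod_i x i ^+ m i.
  by rewrite big_map; apply: eq_bigr => q _; rewrite /cf big4.
apply: big_sub_uniq.
- exact: msupp_uniq.
- by rewrite map_inj_uniq //; exact: mk_inj.
- move=> m mp; rewrite (mk_of m); apply: map_f; apply: Lgen_complete.
  by rewrite -(homog_mdeg hp mp) mdegE big4.
- by move=> m _ /memN_msupp_eq0 ->; rewrite mul0r.
Qed.

Lemma homog_eq (p p' : P) d : p \is d.-homog -> p' \is d.-homog ->
  (forall q, q \in Lgen d -> cf p q = cf p' q) -> p = p'.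
Proof.
move=> hp hp' H; apply/mpolyP => m.
case: (eqVneq (mdeg m) d) => [Hm|Hm]; last first.
  by rewrite !(dhomog_nemf_coeff _ Hm).
rewrite (mk_of m); apply: H; apply: Lgen_complete.
by rewrite -Hm mdegE big4.
Qed.


Definition Bnd (r : R -> R) := exists K, forall t, `|t| <= 1 -> `|r t| <= K.

Lemma Bnd_const c : Bnd (fun _ => c).
Proof. by exists `|c|. Qed.

Lemma Bnd_id : Bnd id.
Proof. by exists 1. Qed.

Lemma Bnd_add r s : Bnd r -> Bnd s -> Bnd (fun t => r t + s t).
Proof.
move=> [K HK] [L HL]; exists (K + L) => t Ht.
by apply: (le_trans (ler_normD _ _)); apply: lerD; [apply: HK | apply: HL].
Qed.

Lemma Bnd_mul r s : Bnd r -> Bnd s -> Bnd (fun t => r t * s t).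
Proof.
move=> [K HK] [L HL]; exists (K * L) => t Ht.
rewrite normrM; apply: ler_pM => //; [exact: HK | exact: HL].
Qed.

Definition TF (phi : R -> R) (a0 a1 : R) :=
  exists r, Bnd r /\ forall t, phi t = a0 + t * a1 + t ^+ 2 * r t.

Lemma TF_ext phi psi a0 a1 b0 b1 : (forall t, phi t = psi t) -> a0 = b0 -> a1 = b1 ->
  TF phi a0 a1 -> TF psi b0 b1.
Proof. by move=> E <- <- [r [Br Hr]]; exists r; split => // t; rewrite -E. Qed.

Lemma TF_const c : TF (fun _ => c) c 0.
Proof. exists (fun _ => 0); split; [exact: Bnd_const|] => t; ring. Qed.

Lemma TF_lin u d : TF (fun t => u + t * d) u d.
Proof. exists (fun _ => 0); split; [exact: Bnd_const|] => t; ring. Qed.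

Lemma TF_add phi psi a0 a1 b0 b1 : TF phi a0 a1 -> TF psi b0 b1 ->
  TF (fun t => phi t + psi t) (a0 + b0) (a1 + b1).
Proof.
move=> [r [Br Hr]] [s [Bs Hs]]; exists (fun t => r t + s t); split.
  exact: Bnd_add.
by move=> t; rewrite Hr Hs; ring.
Qed.

Lemma TF_mul phi psi a0 a1 b0 b1 : TF phi a0 a1 -> TF psi b0 b1 ->
  TF (fun t => phi t * psi t) (a0 * b0) (a0 * b1 + a1 * b0).
Proof.
move=> [r [Br Hr]] [s [Bs Hs]].
exists (fun t => a1 * b1 + a0 * s t + t * (a1 * s t) + r t * b0 + t * (r t * b1)
                 + t ^+ 2 * (r t * s t)); split.
  repeat apply: Bnd_add; repeat apply: Bnd_mul;
    (exact: Bnd_const || exact: Bnd_id || done || (repeat apply: Bnd_mul; (exact: Bnd_id || done))).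
by move=> t; rewrite Hr Hs; ring.
Qed.

Lemma TF_pow phi a0 a1 k : TF phi a0 a1 ->
  TF (fun t => phi t ^+ k) (a0 ^+ k) (k%:R * a0 ^+ k.-1 * a1).
Proof.
move=> H; elim: k => [|k IH].
  by apply: (TF_ext _ _ _ (TF_const 1)) => [t|//|]; rewrite ?expr0 // mul0r mul0r.
apply: (TF_ext _ _ _ (TF_mul IH H)) => [t|//|]; first by rewrite exprS mulrC.
  by rewrite exprS mulrC.
case: k {IH} => [|k]; first by rewrite /= !expr0; ring.
rewrite /= exprS -[(k.+2)%:R]natr1 -[(k.+1)%:R]natr1; ring.
Qed.

Lemma TF_sum (I : Type) (s : seq I) (F : I -> R -> R) (A0 A1 : I -> R) :
  (forall i, TF (F i) (A0 i) (A1 i)) ->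
  TF (fun t => \sum_(i <- s) F i t) (\sum_(i <- s) A0 i) (\sum_(i <- s) A1 i).
Proof.
move=> H; elim: s => [|i s IH].
  by apply: (TF_ext _ _ _ (TF_const 0)) => [t|//|//]; rewrite big_nil.
apply: (TF_ext _ _ _ (TF_add (H i) IH)) => [t|//|//]; by rewrite big_cons.
Qed.

Lemma TF_scale c phi a0 a1 : TF phi a0 a1 -> TF (fun t => c * phi t) (c * a0) (c * a1).
Proof.
move=> H; apply: (TF_ext _ _ _ (TF_mul (TF_const c) H)) => //; ring.
Qed.

Lemma TF_zero phi a : TF phi 0 a -> (forall t, `|t| <= 1 -> 0 <= phi t) -> a = 0.
Proof.
move=> [r [[K HK] Hr]] Hp.
have K0 : 0 <= K by apply: le_trans (HK 0 _); rewrite ?normr0.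
apply/eqP; apply/negPn/negP => a0.
pose D := `|a| + K + 1.
have D0 : 0 < D by rewrite /D; apply: ltr_wpDl => //; apply: addr_ge0.
pose t := - a / D.
have Ht : `|t| <= 1.
  rewrite /t normrM normrN normfV (gtr0_norm D0) ler_pdivrMr // mul1r /D.
  by rewrite -addrA lerDl addr_ge0.
have := Hp t Ht; rewrite Hr add0r.
have Hrt := HK t Ht.
have : t ^+ 2 * r t <= t ^+ 2 * K.
  apply: ler_wpM2l; first exact: sqr_ge0.
  exact: le_trans (ler_norm _) Hrt.
have aD : a * t = - a ^+ 2 / D by rewrite /t; rewrite mulrA mulrN expr2.
have t2 : t ^+ 2 = a ^+ 2 / D ^+ 2 by rewrite /t expr_div_n sqrrN.
move=> H1 H2.
have : 0 <= - a ^+ 2 / D + a ^+ 2 / D ^+ 2 * K.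
  by apply: (le_trans H2); rewrite mulrC aD -t2 lerD2l.
have a2 : 0 < a ^+ 2 by rewrite exprn_even_gt0 //.
have -> : - a ^+ 2 / D + a ^+ 2 / D ^+ 2 * K = - (a ^+ 2 * (D - K)) / D ^+ 2.
  by field; rewrite gt_eqF.
rewrite pmulr_lge0 ?invr_gt0 ?exprn_gt0 // oppr_ge0 => H3.
have : 0 < a ^+ 2 * (D - K).
  apply: mulr_gt0 => //; rewrite subr_gt0 /D -addrA ltr_wpDl //.
  by rewrite ltrDl.
by rewrite ltNge H3.
Qed.


Definition pt (z : 'I_4 -> R) (i : 'I_4) (t : R) : 'I_4 -> R :=
  fun j => z j + t * (j == i)%:R.

Definition Dk (z : 'I_4 -> R) (i j : 'I_4) (k : nat) : R :=
  k%:R * z j ^+ k.-1 * (j == i)%:R.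

Definition dmonoq (q : quad) (z : 'I_4 -> R) (i : 'I_4) : R :=
  let A0 := z o0 ^+ q.1.1.1 in let A1 := z o1 ^+ q.1.1.2 in
  let A2 := z o2 ^+ q.1.2 in let A3 := z o3 ^+ q.2 in
  ((A0 * Dk z i o1 q.1.1.2 + Dk z i o0 q.1.1.1 * A1) * A2 + (A0 * A1) * Dk z i o2 q.1.2) * A3
  + (A0 * A1 * A2) * Dk z i o3 q.2.

Lemma TF_var z i j k : TF (fun t => pt z i t j ^+ k) (z j ^+ k) (Dk z i j k).
Proof. exact: (TF_pow k (TF_lin (z j) ((j == i)%:R))). Qed.

Lemma TF_mono q z i : TF (fun t => monoq q (pt z i t)) (monoq q z) (dmonoq q z i).
Proof.
apply: (TF_ext _ _ _ (TF_mul (TF_mul (TF_mul (TF_var z i o0 q.1.1.1) (TF_var z i o1 q.1.1.2))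
  (TF_var z i o2 q.1.2)) (TF_var z i o3 q.2))) => //. rewrite /dmonoq /=; ring.
Qed.

Lemma grad0 (p : P) d z i : uniq (Lgen d) -> p \is d.-homog ->
  (forall t, `|t| <= 1 -> 0 <= p.@[pt z i t]) -> p.@[z] = 0 ->
  \sum_(q <- Lgen d) cf p q * dmonoq q z i = 0.
Proof.
move=> uL hp Hpos Hz.
apply: (@TF_zero (fun t => p.@[pt z i t])); last exact: Hpos.
have H := TF_sum (Lgen d) (fun q => TF_scale (cf p q) (TF_mono q z i)).
apply: (TF_ext _ _ _ H) => [t||//].
  by rewrite (homog_eval _ uL hp).
by rewrite (homog_eval z uL hp) in Hz.
Qed.

End Infra.

Local Open Scope ring_scope.

Section G4.
Variable R : realType.
Local Notation P := {mpoly R[4]}.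

Definition G (a b c d : R) : R :=
  a^+3 + b^+3 + c^+3 + d^+3 + 3%:R * (b*c*d + a*c*d + a*b*d + a*b*c)
  - (a^+2*(b+c+d) + b^+2*(a+c+d) + c^+2*(a+b+d) + d^+2*(a+b+c)).

Lemma g4_eval x : (g4 R).@[x] = G (x (o0)) (x (o1)) (x (o2)) (x (o3)).
Proof.
rewrite /g4 /S3 /S111 /T21 !big4.
rewrite !(big_mkcond (fun j : 'I_4 => j != _)) !big4 /=.
rewrite !exprS !expr0 !(mevalD, mevalB, mevalN, mevalM, mevalZ, mevalXU, meval1, meval0) /G.
ring.
Qed.

Lemma homM d e f (p q : P) : p \is d.-homog -> q \is e.-homog -> (d + e)%N = f -> p * q \is f.-homog.
Proof. by move=> hp hq <-; apply: dhomogM. Qed.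

Lemma homX (i : 'I_4) : ('X_i : P) \is 1.-homog.
Proof. by rewrite dhomogX; apply/eqP; apply: mdeg1. Qed.

Lemma homXn (i : 'I_4) k : ('X_i : P) ^+ k \is k.-homog.
Proof. by have := dhomogMn k (homX i); rewrite mul1n. Qed.

Lemma g4_homog : g4 R \is 3.-homog.
Proof.
rewrite /g4 /S3 /S111 /T21 !big4.
rewrite !(big_mkcond (fun j : 'I_4 => j != _)) !big4 /= ?mul1r ?mulr1 ?add0r ?addr0.
apply: rpredB; first apply: rpredD.
- by repeat apply: rpredD; apply: homXn.
- apply: rpredZ; repeat apply: rpredD;
  by refine (homM (d := 2) (e := 1) (homM (d:=1) (e:=1) (homX _) (homX _) _) (homX _) _).
- repeat apply: rpredD; refine (homM (d := 2) (e := 1) _ _ _) => //; rewrite ?homXn //;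
  by repeat apply: rpredD; apply: homX.
Qed.

Definition sqt : 4.-tuple P := [tuple 'X_i ^+ 2 | i < 4].

Lemma comp_sq_homog (p : P) d : p \is d.-homog -> comp_mpoly sqt p \is (2 * d)%N.-homog.
Proof.
move=> hp; rewrite comp_mpolyEX big_seq; apply: rpred_sum => m mp; apply: rpredZ.
rewrite comp_mpolyX big4 /= !tnth_mktuple.
have hm := homog_mdeg hp mp; rewrite mdegE big4 /= in hm.
have E : forall (i : 'I_4) k, ('X_i : P) ^+ 2 ^+ k \is (2 * k)%N.-homog.
  by move=> i k; rewrite -exprM; apply: homXn.
refine (homM (homM (homM (E o0 _) (E o1 _) _) (E o2 _) _) (E o3 _) _);
  try reflexivity; by rewrite -hm !mulnDr.
Qed.

Lemma g4sq_homog : g4sq R \is 6.-homog.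
Proof. exact: (comp_sq_homog g4_homog). Qed.

Lemma g4sq_eval x : (g4sq R).@[x] = G (x o0 ^+ 2) (x o1 ^+ 2) (x o2 ^+ 2) (x o3 ^+ 2).
Proof.
rewrite /g4sq comp_mpoly_meval g4_eval !tnth_mktuple.
by rewrite !expr2 !mevalM !mevalXU.
Qed.


End G4.

Local Open Scope ring_scope.

Section G4b.
Variable R : realType.
Local Notation G := (@G R).
Lemma G_sorted a b c d : 0 <= d -> d <= c -> c <= b -> b <= a -> 0 <= G a b c d.
Proof.
move=> hs hu hv hw.
have -> : G a b c d =
  let s := d in let u := c - d in let v := b - c in let w := a - b in
  w^+3 + 2%:R*v*w^+2 + u*w^+2 + u*v*w + u*v^+2 + 2%:R*s*v*w + 2%:R*s*v^+2 + 4%:R*s*u*w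
  + 8%:R*s*u*v + 6%:R*s*u^+2 + 3%:R*s^+2*w + 6%:R*s^+2*v + 9%:R*s^+2*u + 4%:R*s^+3.
  by rewrite /G /=; ring.
rewrite -subr_ge0 in hu; rewrite -subr_ge0 in hv; rewrite -subr_ge0 in hw.
move: (c - d) (b - c) (a - b) hu hv hw => u v w hu hv hw /=.
repeat apply: addr_ge0; repeat apply: mulr_ge0 => //; rewrite ?exprn_ge0 //.
Qed.

Ltac Gperm x y z w := rewrite (_ : G _ _ _ _ = G x y z w); last (by rewrite /G; ring).

Lemma G_L2 a b c d : 0 <= c -> 0 <= d -> c <= b -> d <= b -> b <= a -> 0 <= G a b c d.
Proof.
move=> *; case: (lerP d c) => h.
  by apply: G_sorted.
by Gperm a b d c; apply: G_sorted => //; apply: ltW.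
Qed.

Lemma G_L3 a b c d : 0 <= b -> 0 <= c -> 0 <= d -> b <= a -> c <= a -> d <= a -> 0 <= G a b c d.
Proof.
move=> *; case: (lerP c b) => h1; case: (lerP d b) => h2; case: (lerP d c) => h3.
all: first [ by apply: G_L2; lra
           | by Gperm a c b d; apply: G_L2; lra
           | by Gperm a d b c; apply: G_L2; lra ].
Qed.

Lemma G_nonneg a b c d : 0 <= a -> 0 <= b -> 0 <= c -> 0 <= d -> 0 <= G a b c d.
Proof.
move=> *.
have Ma : b <= a -> c <= a -> d <= a -> 0 <= G a b c d by move=> *; apply: G_L3.
have Mb : a <= b -> c <= b -> d <= b -> 0 <= G a b c d.
  by move=> *; Gperm b a c d; apply: G_L3.
have Mc : a <= c -> b <= c -> d <= c -> 0 <= G a b c d.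
  by move=> *; Gperm c a b d; apply: G_L3.
have Md : a <= d -> b <= d -> c <= d -> 0 <= G a b c d.
  by move=> *; Gperm d a b c; apply: G_L3.
case: (lerP b a) => h1.
  case: (lerP c a) => h2.
    by case: (lerP d a) => h3; [apply: Ma | apply: Md]; lra.
  by case: (lerP d c) => h3; [apply: Mc | apply: Md]; lra.
case: (lerP c b) => h2.
  by case: (lerP d b) => h3; [apply: Mb | apply: Md]; lra.
by case: (lerP d c) => h3; [apply: Mc | apply: Md]; lra.
Qed.

End G4b.

Local Open Scope ring_scope.

Section Gen.
Variable S : comNzRingType.
Definition mono4 (q : quad) (w : S * S * S * S) : S :=
  w.1.1.1 ^+ q.1.1.1 * w.1.1.2 ^+ q.1.1.2 * w.1.2 ^+ q.1.2 * w.2 ^+ q.2.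
Definition dk (x : S) (k : nat) (b : bool) : S := k%:R * x ^+ k.-1 * b%:R.
Definition dmono4 (q : quad) (w : S * S * S * S) (i : 'I_4) : S :=
  let A0 := w.1.1.1 ^+ q.1.1.1 in let A1 := w.1.1.2 ^+ q.1.1.2 in
  let A2 := w.1.2 ^+ q.1.2 in let A3 := w.2 ^+ q.2 in
  ((A0 * dk w.1.1.2 q.1.1.2 (o1 == i) + dk w.1.1.1 q.1.1.1 (o0 == i) * A1) * A2
     + (A0 * A1) * dk w.1.2 q.1.2 (o2 == i)) * A3
  + (A0 * A1 * A2) * dk w.2 q.2 (o3 == i).
End Gen.

Section ZR.
Variable R : realType.
Local Notation P := {mpoly R[4]}.

Definition zR (z : Z) : R := (int_of_Z z)%:~R.

Lemma zRD a b : zR (a + b) = zR a + zR b.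
Proof. by rewrite /zR rmorphD intrD. Qed.
Lemma zRM a b : zR (a * b) = zR a * zR b.
Proof. by rewrite /zR rmorphM intrM. Qed.
Lemma zR1 : zR 1 = 1.
Proof. by rewrite /zR rmorph1. Qed.
Lemma zR0 : zR 0 = 0.
Proof. by rewrite /zR rmorph0. Qed.
Lemma zRN a : zR (- a) = - zR a.
Proof. by rewrite /zR rmorphN intrN. Qed.
Lemma zRX a k : zR (a ^+ k) = zR a ^+ k.
Proof. by elim: k => [|k IH]; rewrite ?expr0 ?zR1 // !exprS zRM IH. Qed.
Lemma zRn k : zR (k%:R) = k%:R.
Proof. by elim: k => [|k IH]; rewrite ?zR0 // -!natr1 zRD IH zR1. Qed.

Definition zptZ (w : Z * Z * Z * Z) : 'I_4 -> R :=
  fun j => nth 0 [:: zR w.1.1.1; zR w.1.1.2; zR w.1.2; zR w.2] j.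

Lemma mono_zR q w : monoq q (zptZ w) = zR (mono4 q w).
Proof. by rewrite /monoq /mono4 !zRM !zRX. Qed.

Lemma dmono_zR q w i : dmonoq q (zptZ w) i = zR (dmono4 q w i).
Proof. by rewrite /dmonoq /dmono4 /Dk /dk /= !(zRD, zRM, zRX, zRn). Qed.


Definition q0 : quad := (0,0,0,0)%N.

Definition dotc (c : quad -> R) (L : seq quad) (r : seq Z) : R :=
  \sum_(k < size L) c (nth q0 L k) * zR (nth 0 r k).

Lemma sum_dot c L (f : quad -> Z) :
  \sum_(q <- L) c q * zR (f q) = dotc c L [seq f q | q <- L].
Proof.
rewrite /dotc (big_nth q0) big_mkord; apply: eq_bigr => k _.
by rewrite (nth_map q0) // size_map.
Qed.

Definition vadd (r s : seq Z) : seq Z :=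
  mkseq (fun k => nth 0 r k + nth 0 s k) (maxn (size r) (size s)).
Definition vscale (a : Z) (r : seq Z) : seq Z := map (fun x => a * x) r.

Lemma nth_vadd r s k : nth 0 (vadd r s) k = nth 0 r k + nth 0 s k.
Proof.
rewrite /vadd; case: (ltnP k (maxn (size r) (size s))) => h.
  by rewrite nth_mkseq.
rewrite nth_default ?size_mkseq //.
rewrite geq_max in h; case/andP: h => h1 h2.
by rewrite !nth_default // addr0.
Qed.

Lemma nth_vscale a r k : nth 0 (vscale a r) k = a * nth 0 r k.
Proof.
case: (ltnP k (size r)) => h; first by rewrite (nth_map 0).
by rewrite !nth_default ?size_map // mulr0.
Qed.

Lemma dot_add c L r s : dotc c L (vadd r s) = dotc c L r + dotc c L s.
Proof.
by rewrite /dotc -big_split; apply: eq_bigr => k _; rewrite nth_vadd zRD mulrDr.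
Qed.

Lemma dot_scale c L a r : dotc c L (vscale a r) = zR a * dotc c L r.
Proof.
rewrite /dotc mulr_sumr; apply: eq_bigr => k _; rewrite nth_vscale zRM; ring.
Qed.

Lemma dot_nil c L : dotc c L [::] = 0.
Proof. by rewrite /dotc big1 // => k _; rewrite nth_nil zR0 mulr0. Qed.

Definition comb (lam : seq Z) (rows : seq (seq Z)) : seq Z :=
  foldr (fun p acc => vadd (vscale p.1 p.2) acc) [::] (zip lam rows).

Lemma dot_comb c L lam rows : (forall r, r \in rows -> dotc c L r = 0) ->
  dotc c L (comb lam rows) = 0.
Proof.
elim: rows lam => [|r rows IH] [|l lam] H //=; rewrite ?dot_nil //.
rewrite dot_add dot_scale H ?mem_head // mulr0 add0r; apply: IH.
by move=> r' hr'; apply: H; rewrite in_cons hr' orbT.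
Qed.

Definition unitv (k : nat) : seq Z := mkseq (fun j => if j == k then 1 else 0) k.+1.

Lemma dot_unit c L k : (k < size L)%N -> dotc c L (unitv k) = c (nth q0 L k).
Proof.
move=> hk; rewrite /dotc (bigD1 (Ordinal hk)) //= big1 ?addr0.
  by rewrite nth_mkseq // eqxx zR1 mulr1.
move=> j /eqP hj; case: (ltnP j k.+1) => h.
  rewrite nth_mkseq //; case: eqP => [E|_]; last by rewrite zR0 mulr0.
  by case: hj; apply: val_inj.
by rewrite (@nth_default _ 0 (unitv k)) ?size_mkseq // zR0 mulr0.
Qed.

Definition target (d : Z) (k : nat) (n : Z) (k0 : nat) : seq Z :=
  vadd (vscale d (unitv k)) (vscale (- n) (unitv k0)).

Definition veq (L : seq quad) (r s : seq Z) : bool :=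
  all (fun j => nth 0 r j == nth 0 s j) (iota 0 (size L)).

Lemma dot_veq c L r s : veq L r s -> dotc c L r = dotc c L s.
Proof.
move/allP => H; rewrite /dotc; apply: eq_bigr => k _.
by rewrite (eqP (H k _)) // mem_iota add0n ltn_ord.
Qed.

Lemma solve_gen c L rows lam d k n k0 :
  (k < size L)%N -> (k0 < size L)%N -> (forall r, r \in rows -> dotc c L r = 0) ->
  veq L (comb lam rows) (target d k n k0) ->
  zR d * c (nth q0 L k) = zR n * c (nth q0 L k0).
Proof.
move=> hk hk0 H E.
have := dot_comb lam H; rewrite (dot_veq c E) /target dot_add !dot_scale !dot_unit // zRN.
by move/eqP; rewrite mulNr addr_eq0 opprK => /eqP.
Qed.

Definition cert := (seq Z * (Z * Z))%type.

Definition certs_ok (L : seq quad) (rows : seq (seq Z)) (k0 : nat) (cs : seq cert) : bool :=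
  (size cs == size L) &&
  all (fun kx => veq L (comb kx.2.1 rows) (target kx.2.2.1 kx.1 kx.2.2.2 k0))
      (zip (iota 0 (size L)) cs).

Lemma solve_all c L rows k0 cs : (k0 < size L)%N -> certs_ok L rows k0 cs ->
  (forall r, r \in rows -> dotc c L r = 0) ->
  forall k, (k < size L)%N ->
  zR (nth ([::], (0, 0)) cs k).2.1 * c (nth q0 L k) =
  zR (nth ([::], (0, 0)) cs k).2.2 * c (nth q0 L k0).
Proof.
move=> hk0 /andP [/eqP sz /allP H] Hr k hk.
eapply solve_gen; [exact: hk | exact: hk0 | exact: Hr |].
have := H (k, nth ([::], (0, 0)) cs k); apply.
have -> : (k, nth ([::], (0, 0)) cs k) = nth (0%N, ([::], (0, 0))) (zip (iota 0 (size L)) cs) k.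
  by rewrite nth_zip ?size_iota ?sz // nth_iota.
by apply: mem_nth; rewrite size_zip size_iota sz minnn.
Qed.

Lemma rowsD_ok (p : P) d (Dl : seq ((Z * Z * Z * Z) * 'I_4)) :
  (forall w i, (w, i) \in Dl -> \sum_(q <- Lgen d) cf p q * dmonoq q (zptZ w) i = 0) ->
  forall r, r \in [seq [seq dmono4 q wi.1 wi.2 | q <- Lgen d] | wi <- Dl] ->
  dotc (cf p) (Lgen d) r = 0.
Proof.
move=> H r /mapP [[w i] hwi ->] /=.
rewrite -sum_dot; apply: etrans (H w i hwi); apply: eq_bigr => q _; by rewrite dmono_zR.
Qed.

Lemma rowsV_ok (p : P) d (Vl : seq (Z * Z * Z * Z)) :
  (forall w, w \in Vl -> \sum_(q <- Lgen d) cf p q * monoq q (zptZ w) = 0) ->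
  forall r, r \in [seq [seq mono4 q w | q <- Lgen d] | w <- Vl] ->
  dotc (cf p) (Lgen d) r = 0.
Proof.
move=> H r /mapP [w hw ->] /=.
rewrite -sum_dot; apply: etrans (H w hw); apply: eq_bigr => q _; by rewrite mono_zR.
Qed.

End ZR.
Local Open Scope ring_scope.

Section Data.
Local Open Scope Z_scope.
Definition Z28 : seq (Z*Z*Z*Z) := ([:: (1, 1, 0, 0); (1, (-1), 0, 0); (1, 0, 1, 0); (1, 0, (-1), 0); (1, 0, 0, 1); (1, 0, 0, (-1)); (0, 1, 1, 0); (0, 1, (-1), 0); (0, 1, 0, 1); (0, 1, 0, (-1)); (0, 0, 1, 1); (0, 0, 1, (-1)); (1, 1, 1, 0); (1, 1, (-1), 0); (1, (-1), 1, 0); (1, (-1), (-1), 0); (1, 1, 0, 1); (1, 1, 0, (-1)); (1, (-1), 0, 1); (1, (-1), 0, (-1)); (1, 0, 1, 1); (1, 0, 1, (-1)); (1, 0, (-1), 1); (1, 0, (-1), (-1)); (0, 1, 1, 1); (0, 1, 1, (-1)); (0, 1, (-1), 1); (0, 1, (-1), (-1))]).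
Definition D112 : seq ((Z*Z*Z*Z) * 'I_4) := [seq (w, i) | w <- Z28, i <- [:: o0; o1; o2; o3]].
Definition cs6 : seq cert := ([:: ([:: (-2); 0; 0; (-4); (-2); 0; 0; (-4); 0; 0; 0; 0; 0; 0; 0; 0; (-3); 0; 0; 3; (-1); 0; 0; (-1); 0; 0; 0; 0; 0; 0; 0; 0; 4; 0; 0; 2; (-4); 0; 0; (-2); 0; 0; 0; 0; 0; 0; 0; 0; 0; 0; 0; 0; 0; 0; 0; 0; 0; 0; 0; 0; 0; 0; 0; 0; 2; 0; 0; (-2); 0; 0; 0; 0; 2; 0; 0; (-2); 0; 0; 0; 0; 0; 0; 0; 0; 0; 0; 0; 0; 0; 0; 0; 0; 0; 0; 0; 0; 0; 0; 0; 0; 0; 0; 0; 0; 0; 0; 0; 0; 0; 0; 0; 0], (24, 24));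
  ([:: 2; 0; 0; (-8); 2; 0; 0; 0; (-3); (-8); 1; 16; (-1); (-8); 1; 0; 1; 12; (-4); (-1); (-1); 4; (-4); (-1); 0; 2; (-2); 0; 0; 2; 2; 0; (-4); (-3); 0; 1; 4; (-1); 0; 1; 4; 0; 2; 0; 4; 0; 2; 0; 1; (-2); 2; 0; 1; (-2); (-2); 0; (-1); 0; 0; 0; (-1); 0; 0; 0; (-2); 4; 0; (-2); (-2); 0; 0; 0; 0; 0; 0; 2; 0; 0; 0; 0; 0; 0; (-4); 2; 4; 0; 0; 2; 0; 0; 0; 0; 0; 0; 0; 0; 0; 0; 0; 0; 0; 0; 0; 0; 0; 0; 0; 0; 0; 0; 0; 0], (16, 0));
  ([:: 2; 0; (-4); 8; 2; 0; (-4); 8; (-3); 0; 3; 0; (-1); 0; (-1); 0; 6; 0; 0; (-6); 2; 0; 0; 2; 4; 0; 2; 0; (-4); 0; (-2); 0; (-8); 0; 0; (-4); 8; 0; 0; 4; 0; 0; (-2); 4; 0; 0; (-2); (-4); 2; 0; (-2); 0; 0; 0; 0; 0; 2; 0; (-2); 0; 0; 0; 0; 0; (-4); 0; 0; 4; 0; 0; 0; 0; (-4); 0; 0; 4; 0; 0; 0; 0; 0; 0; 0; 0; 0; 0; 0; 0; 0; 0; 0; 0; 0; 0; 0; 0; 0; 0; 0; 0; 0; 0; 0; 0; 0; 0; 0; 0; 0; 0; 0; 0], (24, (-24)));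
  ([:: (-6); 0; 0; 24; (-6); 0; 0; 0; 9; 24; (-3); (-48); 3; 24; (-3); 0; (-3); (-36); 12; 3; 3; (-12); 12; 3; 0; (-6); 6; 0; 0; (-6); (-6); 0; 12; 9; 0; (-3); (-12); 3; 0; (-3); (-12); 0; (-7); 5; (-12); 0; (-5); 5; (-3); 6; (-6); 0; (-3); 6; 6; 0; 3; 0; 0; 0; 3; 0; 0; 0; 6; (-12); 0; 6; 6; 0; 0; 0; 0; 0; 0; (-6); 0; 0; 0; 0; 0; 0; 12; (-6); (-12); 0; 0; (-6); 0; 0; 0; 0; 0; 0; 0; 0; 0; 0; 0; 0; 0; 0; 0; 0; 0; 0; 0; 0; 0; 0; 0; 0], (24, 0));
  ([:: 2; 0; 8; (-4); 2; 0; 8; (-4); 6; 0; (-6); 0; 2; 0; 2; 0; (-3); 0; 0; 3; (-1); 0; 0; (-1); (-8); 0; (-4); 0; 8; 0; 4; 0; 4; 0; 0; 2; (-4); 0; 0; (-2); 0; 0; 4; (-2); 0; 0; 4; 2; (-4); 0; 4; 0; 0; 0; 0; 0; (-4); 0; 4; 0; 0; 0; 0; 0; 2; 0; 0; (-2); 0; 0; 0; 0; 2; 0; 0; (-2); 0; 0; 0; 0; 0; 0; 0; 0; 0; 0; 0; 0; 0; 0; 0; 0; 0; 0; 0; 0; 0; 0; 0; 0; 0; 0; 0; 0; 0; 0; 0; 0; 0; 0; 0; 0], (24, (-24)));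
  ([:: 2; 0; 0; (-8); 2; 0; 0; 0; (-3); (-8); 1; 16; (-1); (-8); 1; 0; 1; 12; (-4); (-1); (-1); 4; (-4); (-1); 0; 2; (-2); 0; 0; 2; 2; 0; (-4); (-3); 0; 1; 4; (-1); 0; 1; 4; 0; 4; (-2); 4; 0; 0; (-2); 1; (-2); 2; 0; 1; (-2); (-2); 0; (-1); 0; 0; 0; (-1); 0; 0; 0; (-2); 4; 0; (-2); (-2); 0; 0; 0; 0; 0; 0; 2; 0; 0; 0; 0; 0; 0; (-4); 2; 4; 0; 0; 2; 0; 0; 0; 0; 0; 0; 0; 0; 0; 0; 0; 0; 0; 0; 0; 0; 0; 0; 0; 0; 0; 0; 0; 0], (16, 0));
  ([:: (-2); 0; (-4); 0; (-2); 0; (-4); 0; (-3); 0; 3; 0; (-1); 0; (-1); 0; 0; 0; 0; 0; 0; 0; 0; 0; 4; 0; 2; 0; (-4); 0; (-2); 0; 0; 0; 0; 0; 0; 0; 0; 0; 0; 0; 0; 0; 0; 0; 0; 0; 2; 0; (-2); 0; 0; 0; 0; 0; 2; 0; (-2); 0; 0; 0; 0; 0; 0; 0; 0; 0; 0; 0; 0; 0; 0; 0; 0; 0; 0; 0; 0; 0; 0; 0; 0; 0; 0; 0; 0; 0; 0; 0; 0; 0; 0; 0; 0; 0; 0; 0; 0; 0; 0; 0; 0; 0; 0; 0; 0; 0; 0; 0; 0; 0], (24, 24));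
  ([:: 0; 0; (-4); 8; 0; 0; (-4); 0; (-1); (-4); 1; 0; 1; (-4); 1; 0; 1; 8; 0; (-1); (-1); 0; 0; (-1); 0; 0; 0; 0; (-8); 0; 0; 0; 0; (-1); 0; 1; 8; 1; 0; 1; 0; 0; 0; 0; 0; 0; 0; 0; 1; 0; 0; 0; (-1); 0; (-2); 0; 1; 0; (-2); 0; (-1); 0; 0; 0; (-2); 0; 0; 0; 2; 0; 0; 2; 0; 0; 0; 2; 0; 0; 0; 0; 0; 0; 0; 0; 0; 0; 0; 0; 0; 0; 0; 0; 0; 0; 0; 0; 0; 0; 0; 0; 0; 0; 0; 0; 0; 0; 0; 0; 0; 0; 0; 0], (16, 0));
  ([:: (-4); 0; 16; (-8); (-4); 0; 16; (-8); 14; 24; (-10); (-32); 2; 24; (-2); 0; (-10); (-40); 8; 10; 2; (-8); 8; 2; (-8); (-3); 7; 32; 24; (-5); (-1); 0; 16; 8; (-4); (-4); (-32); 0; (-4); (-4); (-8); 4; 0; (-4); (-8); 4; 0; 4; (-8); 4; 0; 0; 0; 4; 8; 0; (-4); 0; 8; 0; 4; 0; 0; 0; 12; (-8); 0; 0; 0; 0; 0; (-4); 4; 0; 0; (-12); 0; 0; 0; 0; 0; 0; 8; (-4); (-8); 0; 0; (-4); 0; 0; 0; 0; 0; 0; 0; 0; 0; (-4); (-8); 8; 0; 4; 0; 0; 0; 0; 0; 0; 0; 0; 0; 0], (24, 0));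
  ([:: 8; 0; (-4); (-24); 8; 0; (-4); 0; (-13); (-36); 5; 64; (-3); (-36); 5; 0; 5; 56; (-16); (-5); (-5); 16; (-16); (-5); 0; 8; (-8); (-40); (-8); 8; 8; (-8); (-16); (-15); (-16); (-1); 24; (-1); 16; (-1); 16; 16; 12; (-4); 16; (-16); 4; (-4); 5; (-8); 8; 0; 3; (-8); (-10); 0; (-3); 0; (-2); 0; (-5); 0; 0; 0; (-10); 16; 0; (-8); (-6); 0; 0; 2; 0; 0; 0; 10; 0; 0; 0; 0; 0; 0; (-16); 8; 16; 0; 0; 8; 0; 0; 0; 0; 0; 0; 0; 0; 0; 8; 0; 0; 0; (-8); 0; 0; 0; 0; 0; 0; 0; 0; 0; 0], (48, 0));
  ([:: 8; 0; (-44); 16; 8; 0; (-20); 16; (-28); (-60); 20; 64; (-4); (-36); 4; 0; 20; 80; (-16); (-20); (-4); 16; (-16); (-4); 16; 9; (-17); (-64); (-48); 7; (-1); 0; (-32); (-16); 8; 8; 64; 0; 8; 8; 16; 16; 0; 8; 16; 16; 0; (-8); 19; (-8); 0; 0; (-3); (-8); (-16); 0; 5; 0; (-16); 0; (-5); 0; 0; 0; (-24); 16; 0; 0; 0; 0; 0; 8; (-8); 0; 0; 24; 0; 0; 0; 0; 0; 0; (-16); 8; 16; 0; 0; 8; 0; 0; 0; 0; 0; 0; 0; 0; 0; 8; 16; (-16); 0; (-8); 0; 0; 0; 0; 0; 0; 0; 0; 0; 0], (48, 0));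
  ([:: (-4); 0; 8; 0; (-4); 0; 8; 0; 8; 24; (-4); (-32); 0; 24; (-4); 0; (-4); (-40); 8; 4; 4; (-8); 8; 4; 0; (-4); 4; 20; 16; (-4); (-4); 4; 8; 9; 8; (-1); (-24); (-1); (-8); (-1); (-8); 4; (-6); 2; (-8); (-4); (-2); 2; (-4); 4; (-4); 0; 0; 4; 8; 0; 0; 0; 4; 0; 4; 0; 0; 0; 8; (-8); 0; 4; 0; 0; 0; (-4); 0; 0; 0; (-8); 0; 0; 0; 0; 0; 0; 8; (-4); (-8); 0; 0; (-4); 0; 0; 0; 0; 0; 0; 0; 0; 0; (-4); 0; 0; 0; 4; 0; 0; 0; 0; 0; 0; 0; 0; 0; 0], (24, 0));
  ([:: 0; 0; 4; 0; 0; 0; (-4); 0; 0; 4; 0; 0; 0; (-4); 0; 0; 0; 0; 0; 0; 0; 0; 0; 0; 0; (-1); 1; 0; 0; 1; 1; 0; 0; 0; 0; 0; 0; 0; 0; 0; 0; 0; 0; 0; 0; 0; 0; 0; (-1); 0; 0; 0; 1; 0; 0; 0; 1; 0; 0; 0; (-1); 0; 0; 0; 0; 0; 0; 0; 0; 0; 0; 0; 0; 0; 0; 0; 0; 0; 0; 0; 0; 0; 0; 0; 0; 0; 0; 0; 0; 0; 0; 0; 0; 0; 0; 0; 0; 0; 0; 0; 0; 0; 0; 0; 0; 0; 0; 0; 0; 0; 0; 0], (16, 0));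
  ([:: 1; 3; 0; 8; 3; (-1); 0; 8; (-2); (-4); 0; 0; (-2); (-4); 0; 0; 6; 0; 0; (-6); 2; 0; 0; 2; 4; 2; 0; 0; 4; 2; 0; 0; (-8); (-2); 0; 0; 8; (-2); 0; 0; 0; 0; 0; 0; 0; 0; 0; 0; 2; (-2); 0; 0; 2; (-2); 0; 0; 0; 0; 0; 0; 0; 0; 0; 0; (-4); 0; 0; 4; 0; 0; 0; 0; (-4); 0; 0; 4; 0; 0; 0; 0; 0; 0; 0; 0; 0; 0; 0; 0; 0; 0; 0; 0; 0; 0; 0; 0; 0; 0; 0; 0; 0; 0; 0; 0; 0; 0; 0; 0; 0; 0; 0; 0], (24, (-24)));
  ([:: 6; (-12); (-32); 24; (-2); 4; (-32); 0; (-11); (-8); 17; 16; 7; (-8); 1; 0; 5; 44; (-4); (-5); (-5); 4; (-4); (-5); 0; 6; (-6); (-40); (-64); (-2); (-2); 8; (-4); 5; 32; 1; 36; 7; 0; 1; 4; (-32); (-8); (-6); 4; 0; (-4); (-6); 5; 6; (-6); 0; (-11); 6; (-10); 0; 11; 0; (-16); 0; (-5); 0; 0; 0; (-10); 4; 0; (-2); 6; 0; 0; 8; 0; 0; 0; 10; 0; 0; 0; 0; 0; 0; (-4); 2; 4; 0; 0; 2; 0; 0; 0; 0; 0; 0; 0; 0; 0; (-8); 16; 0; 0; (-8); 0; 0; 0; 0; 0; 0; 0; 0; 0; 0], (48, 0));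
  ([:: (-5); 3; 12; (-4); (-3); (-1); 4; (-4); 5; 12; (-5); (-16); (-1); 4; (-1); 0; (-5); (-20); 4; 5; 1; (-4); 4; 1; 0; (-3); 3; 16; 16; (-1); (-1); 0; 8; 2; (-8); (-2); (-16); (-2); (-8); (-2); (-4); 0; 0; (-2); (-4); 0; 0; 2; (-3); 0; 0; 0; 3; 0; 4; 0; (-1); 0; 4; 0; 1; 0; 0; 0; 6; (-4); 0; 0; 0; 0; 0; (-2); 2; 0; 0; (-6); 0; 0; 0; 0; 0; 0; 4; (-2); (-4); 0; 0; (-2); 0; 0; 0; 0; 0; 0; 0; 0; 0; 0; (-4); 4; 0; 4; 0; 0; 0; 0; 0; 0; 0; 0; 0; 0], (8, 24));
  ([:: 6; (-12); (-32); 24; (-2); 4; (-32); 0; (-11); (-8); 17; 16; 7; (-8); 1; 0; 5; 44; (-4); (-5); (-5); 4; (-4); (-5); 0; 6; (-6); (-16); (-64); (-2); (-2); (-16); (-4); 5; 8; 1; 36; 7; 24; 1; 4; (-32); (-14); 0; 4; 0; 2; 0; 5; 6; (-6); 0; (-11); 6; (-10); 0; 11; 0; (-16); 0; (-5); 0; 0; 0; (-10); 4; 0; (-2); 6; 0; 0; 8; 0; 0; 0; 10; 0; 0; 0; 0; 0; 0; (-4); 2; 4; 0; 0; 2; 0; 0; 0; 0; 0; 0; 0; 0; 0; (-8); 16; 0; 0; (-8); 0; 0; 0; 0; 0; 0; 0; 0; 0; 0], (48, 0));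
  ([:: 1; 3; 8; 0; 3; (-1); 8; 0; 4; (-4); (-6); 0; 0; (-4); 2; 0; 0; 0; 0; 0; 0; 0; 0; 0; (-4); 0; 0; 0; 12; 0; 0; 0; 0; 0; 0; 0; 0; 0; 0; 0; 0; 0; 0; 0; 0; 0; 0; 0; (-2); (-2); 4; 0; 2; (-2); 0; 0; (-4); 0; 4; 0; 0; 0; 0; 0; 0; 0; 0; 0; 0; 0; 0; 0; 0; 0; 0; 0; 0; 0; 0; 0; 0; 0; 0; 0; 0; 0; 0; 0; 0; 0; 0; 0; 0; 0; 0; 0; 0; 0; 0; 0; 0; 0; 0; 0; 0; 0; 0; 0; 0; 0; 0; 0], (24, (-24)));
  ([:: 0; 0; 12; (-24); 0; 0; 12; 0; 3; 12; (-3); 0; (-3); 12; (-3); 0; (-3); (-24); 0; 3; 3; 0; 0; 3; 0; 0; 0; 0; 24; 0; 0; 0; 0; 2; 0; 2; (-24); (-2); 0; 2; 0; 0; 0; 0; 0; 0; 0; 0; (-3); 0; 0; 0; 3; 0; 6; 0; (-3); 0; 6; 0; 3; 0; 0; 0; 6; 0; 0; 0; (-6); 0; 0; (-6); 0; 0; 0; (-6); 0; 0; 0; 0; 0; 0; 0; 0; 0; 0; 0; 0; 0; 0; 0; 0; 0; 0; 0; 0; 0; 0; 0; 0; 0; 0; 0; 0; 0; 0; 0; 0; 0; 0; 0; 0], (24, 0));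
  ([:: 8; 0; (-44); 16; 8; 0; (-20); 16; (-28); (-60); 20; 64; (-4); (-36); 4; 0; 20; 80; (-16); (-20); (-4); 16; (-16); (-4); 16; 3; (-11); (-64); (-48); 13; 5; 0; (-32); (-16); 32; 8; 64; 0; 32; 8; 16; (-8); 0; 8; 16; (-8); 0; (-8); 19; (-8); 0; 0; (-3); (-8); (-16); 0; 5; 0; (-16); 0; (-5); 0; 0; 0; (-24); 16; 0; 0; 0; 0; 0; 8; (-8); 0; 0; 24; 0; 0; 0; 0; 0; 0; (-16); 8; 16; 0; 0; 8; 0; 0; 0; 0; 0; 0; 0; 0; 0; 8; 16; (-16); 0; (-8); 0; 0; 0; 0; 0; 0; 0; 0; 0; 0], (48, 0));
  ([:: 8; 0; (-4); (-24); 8; 0; (-4); 0; (-13); (-36); 5; 64; (-3); (-36); 5; 0; 5; 56; (-16); (-5); (-5); 16; (-16); (-5); 0; 8; (-8); (-16); (-8); 8; 8; 16; (-16); (-21); (-16); 5; 24; 5; 16; 5; 16; (-8); 12; (-4); 16; 8; 4; (-4); 5; (-8); 8; 0; 3; (-8); (-10); 0; (-3); 0; (-2); 0; (-5); 0; 0; 0; (-10); 16; 0; (-8); (-6); 0; 0; 2; 0; 0; 0; 10; 0; 0; 0; 0; 0; 0; (-16); 8; 16; 0; 0; 8; 0; 0; 0; 0; 0; 0; 0; 0; 0; 8; 0; 0; 0; (-8); 0; 0; 0; 0; 0; 0; 0; 0; 0; 0], (48, 0));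
  ([:: 0; 0; (-12); 0; 0; 0; 12; 0; 0; (-12); 0; 0; 0; 12; 0; 0; 0; 0; 0; 0; 0; 0; 0; 0; 0; 2; 2; 0; 0; (-2); 2; 0; 0; 0; 0; 0; 0; 0; 0; 0; 0; 0; 0; 0; 0; 0; 0; 0; 3; 0; 0; 0; (-3); 0; 0; 0; (-3); 0; 0; 0; 3; 0; 0; 0; 0; 0; 0; 0; 0; 0; 0; 0; 0; 0; 0; 0; 0; 0; 0; 0; 0; 0; 0; 0; 0; 0; 0; 0; 0; 0; 0; 0; 0; 0; 0; 0; 0; 0; 0; 0; 0; 0; 0; 0; 0; 0; 0; 0; 0; 0; 0; 0], (24, 0));
  ([:: 4; (-6); 0; (-4); 0; 2; 0; (-4); 4; 8; 0; 0; 4; 8; 0; 0; (-3); 0; 0; 3; (-1); 0; 0; (-1); (-8); (-4); 0; 0; (-8); (-4); 0; 0; 4; 4; 0; 0; (-4); 4; 0; 0; 0; 0; 0; 0; 0; 0; 0; 0; (-4); 4; 0; 0; (-4); 4; 0; 0; 0; 0; 0; 0; 0; 0; 0; 0; 2; 0; 0; (-2); 0; 0; 0; 0; 2; 0; 0; (-2); 0; 0; 0; 0; 0; 0; 0; 0; 0; 0; 0; 0; 0; 0; 0; 0; 0; 0; 0; 0; 0; 0; 0; 0; 0; 0; 0; 0; 0; 0; 0; 0; 0; 0; 0; 0], (24, (-24)));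
  ([:: (-6); 6; 16; 0; (-2); (-2); 16; 0; 10; 16; (-10); (-32); (-2); 16; (-2); 0; (-4); (-40); 8; 4; 4; (-8); 8; 4; 0; (-6); 6; 20; 32; (-2); (-2); (-4); 8; 2; (-4); (-2); (-24); (-2); (-12); (-2); (-8); 16; 1; 3; (-8); 0; (-1); 3; (-4); 0; 0; 0; 4; 0; 8; 0; (-4); 0; 8; 0; 4; 0; 0; 0; 8; (-8); 0; 4; 0; 0; 0; (-4); 0; 0; 0; (-8); 0; 0; 0; 0; 0; 0; 8; (-4); (-8); 0; 0; (-4); 0; 0; 0; 0; 0; 0; 0; 0; 0; 4; (-8); 0; 0; 4; 0; 0; 0; 0; 0; 0; 0; 0; 0; 0], (24, 0));
  ([:: 4; (-6); (-4); 0; 0; 2; (-4); 0; 1; 8; 3; 0; 3; 8; (-1); 0; 0; 0; 0; 0; 0; 0; 0; 0; (-4); 0; 0; 0; (-12); 0; 0; 0; 0; 0; 0; 0; 0; 0; 0; 0; 0; 0; 0; 0; 0; 0; 0; 0; (-2); 4; (-2); 0; (-4); 4; 0; 0; 2; 0; (-2); 0; 0; 0; 0; 0; 0; 0; 0; 0; 0; 0; 0; 0; 0; 0; 0; 0; 0; 0; 0; 0; 0; 0; 0; 0; 0; 0; 0; 0; 0; 0; 0; 0; 0; 0; 0; 0; 0; 0; 0; 0; 0; 0; 0; 0; 0; 0; 0; 0; 0; 0; 0; 0], (24, (-24)));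
  ([:: 0; 0; (-4); 8; 0; 0; (-4); 0; (-1); (-4); 1; 0; 1; (-4); 1; 0; 1; 8; 0; (-1); (-1); 0; 0; (-1); 0; 0; 0; 0; (-8); 0; 0; 0; 0; 1; 0; (-1); 8; (-1); 0; (-1); 0; 0; 0; 0; 0; 0; 0; 0; 1; 0; 0; 0; (-1); 0; (-2); 0; 1; 0; (-2); 0; (-1); 0; 0; 0; (-2); 0; 0; 0; 2; 0; 0; 2; 0; 0; 0; 2; 0; 0; 0; 0; 0; 0; 0; 0; 0; 0; 0; 0; 0; 0; 0; 0; 0; 0; 0; 0; 0; 0; 0; 0; 0; 0; 0; 0; 0; 0; 0; 0; 0; 0; 0; 0], (16, 0));
  ([:: 0; 0; 4; 0; 0; 0; (-4); 0; 0; 4; 0; 0; 0; (-4); 0; 0; 0; 0; 0; 0; 0; 0; 0; 0; 0; 1; (-1); 0; 0; (-1); (-1); 0; 0; 0; 0; 0; 0; 0; 0; 0; 0; 0; 0; 0; 0; 0; 0; 0; (-1); 0; 0; 0; 1; 0; 0; 0; 1; 0; 0; 0; (-1); 0; 0; 0; 0; 0; 0; 0; 0; 0; 0; 0; 0; 0; 0; 0; 0; 0; 0; 0; 0; 0; 0; 0; 0; 0; 0; 0; 0; 0; 0; 0; 0; 0; 0; 0; 0; 0; 0; 0; 0; 0; 0; 0; 0; 0; 0; 0; 0; 0; 0; 0], (16, 0));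
  ([:: (-3); 3; 0; 0; (-1); (-1); 0; 0; (-2); (-4); 0; 0; (-2); (-4); 0; 0; 0; 0; 0; 0; 0; 0; 0; 0; 4; 2; 0; 0; 4; 2; 0; 0; 0; 0; 0; 0; 0; 0; 0; 0; 0; 0; 0; 0; 0; 0; 0; 0; 2; (-2); 0; 0; 2; (-2); 0; 0; 0; 0; 0; 0; 0; 0; 0; 0; 0; 0; 0; 0; 0; 0; 0; 0; 0; 0; 0; 0; 0; 0; 0; 0; 0; 0; 0; 0; 0; 0; 0; 0; 0; 0; 0; 0; 0; 0; 0; 0; 0; 0; 0; 0; 0; 0; 0; 0; 0; 0; 0; 0; 0; 0; 0; 0], (24, 24));
  ([:: 0; 0; 4; 8; 0; 0; 4; 0; 3; 8; (-1); 0; 1; 8; (-1); 0; (-3); (-12); 0; 1; (-1); (-4); 0; 1; (-4); (-2); 0; 0; 4; (-2); 0; 0; 4; 3; 0; (-1); (-4); 1; 0; (-1); 0; 0; 0; 0; 0; 0; 0; 0; (-3); 2; 0; 0; (-1); 2; 2; 0; (-1); 0; 2; 0; 1; 0; 0; 0; 2; (-4); 0; 2; 2; 0; 0; 0; 0; 0; 0; (-2); 0; 0; 0; 0; 0; 0; 0; 0; 0; 0; 0; 0; 0; 0; 0; 0; 0; 0; 0; 0; 0; 0; 0; 0; 0; 0; 0; 0; 0; 0; 0; 0; 0; 0; 0; 0], (16, 0));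
  ([:: (-4); 0; 0; (-8); (-4); 0; 0; (-8); 7; 0; 1; 0; 1; 0; 1; 0; (-2); 0; 4; 2; 2; 0; 4; 2; 0; 0; 0; 0; 0; 0; 0; 0; 8; 0; 0; 4; (-8); 0; 0; (-4); (-4); 0; 0; (-4); (-4); 0; 0; 4; 0; 0; 0; 0; 0; 0; 0; 0; 0; 0; 0; 0; 0; 0; 0; 0; 4; 0; 0; (-4); 0; 0; 0; 0; 4; 0; 0; (-4); 0; 0; 0; 0; (-4); 0; 0; 4; (-4); 0; 0; (-4); 0; 0; 0; 0; 0; 0; 0; 0; 0; 0; 0; 0; 0; 0; 0; 0; 0; 0; 0; 0; 0; 0; 0; 0], (24, 0));
  ([:: 8; 0; 4; (-24); 8; 0; 4; 0; (-9); (-24); 3; 24; (-3); (-24); 3; (-8); (-1); 36; (-32); (-9); (-3); 12; 0; (-9); (-4); 6; (-8); 0; 4; 6; 8; 0; (-12); (-9); 0; 3; 12; (-3); 0; 3; 32; 0; 12; (-4); 0; 0; 4; (-4); 1; (-6); 8; 0; 3; (-6); (-6); 0; (-5); 0; 2; 0; (-3); 0; 0; 0; (-6); 12; 0; (-6); (-6); 0; 0; 0; 0; 0; 0; 6; 0; 0; 0; 0; 8; 0; (-16); 8; 8; 0; 0; 8; 0; 0; 0; 0; 0; 0; 0; 0; 0; 0; 0; 0; 0; 0; 0; 0; 0; 0; 0; 0; 0; 0; 0; 0], (48, 0));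
  ([:: 8; 0; (-36); 16; 8; 0; (-12); 16; (-14); 12; (-2); 0; (-2); (-12); (-2); 0; 4; 0; (-8); (-4); (-4); 0; (-8); (-4); 0; (-3); 3; 0; 0; 3; 3; 0; (-16); 0; 0; (-8); 16; 0; 0; 8; 32; 0; 0; 8; 32; 0; 0; (-8); 3; 6; (-6); 0; (-3); (-6); (-6); 0; 3; 0; 0; 0; (-3); 0; 0; 0; (-8); 0; 0; 8; 0; 0; 0; 0; (-8); 0; 0; 8; 0; 0; 0; 0; 8; 0; 0; (-8); 8; 0; 0; 8; 0; 0; 0; 0; 0; 0; 0; 0; 0; 0; 0; 0; 0; 0; 0; 0; 0; 0; 0; 0; 0; 0; 0; 0], (48, 0));
  ([:: (-4); 0; (-8); 0; (-4); 0; (-8); 0; 0; 0; 0; (-12); 0; 0; 0; 4; 5; 0; 16; 3; 3; 0; 0; 3; 8; 0; 4; 0; (-8); 0; (-4); 0; 0; 0; 0; 0; 0; 0; 0; 0; (-4); 0; (-6); 2; (-12); 0; (-2); 2; 4; 0; (-4); 0; 0; 0; 0; 0; 4; 0; (-4); 0; 0; 0; 0; 0; 0; 0; 0; 0; 0; 0; 0; 0; 0; 0; 0; 0; 0; 0; 0; 0; (-4); 0; 8; (-4); (-4); 0; 0; (-4); 0; 0; 0; 0; 0; 0; 0; 0; 0; 0; 0; 0; 0; 0; 0; 0; 0; 0; 0; 0; 0; 0; 0; 0], (24, 0));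
  ([:: 0; 0; 12; 0; 0; 0; 4; 0; 0; (-4); 0; 0; 0; 4; 0; 0; 0; 0; 0; 0; 0; 0; 0; 0; 0; 1; (-1); 0; 0; (-1); (-1); 0; 0; 0; 0; 0; 0; 0; 0; 0; 0; 0; 0; 0; 0; 0; 0; 0; (-1); (-2); 2; 0; 1; 2; 2; 0; (-1); 0; 0; 0; 1; 0; 0; 0; 0; 0; 0; 0; 0; 0; 0; 0; 0; 0; 0; 0; 0; 0; 0; 0; 0; 0; 0; 0; 0; 0; 0; 0; 0; 0; 0; 0; 0; 0; 0; 0; 0; 0; 0; 0; 0; 0; 0; 0; 0; 0; 0; 0; 0; 0; 0; 0], (16, 0));
  ([:: 3; 1; 0; (-8); (-3); 1; 0; (-8); 0; 0; 0; 0; 0; 0; 0; 0; (-2); 4; 0; 2; 2; 4; 0; 2; 0; 0; 0; 0; 0; 0; 0; 0; 4; 0; 0; 0; (-12); 0; 0; 0; 0; 0; 0; 0; 0; 0; 0; 0; 0; 0; 0; 0; 0; 0; 0; 0; 0; 0; 0; 0; 0; 0; 0; 0; 0; 0; 0; 0; (-4); 0; 0; (-4); 4; 0; 0; (-4); 0; 0; 0; 0; 0; 0; 0; 0; 0; 0; 0; 0; 0; 0; 0; 0; 0; 0; 0; 0; 0; 0; 0; 0; 0; 0; 0; 0; 0; 0; 0; 0; 0; 0; 0; 0], (24, 0));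
  ([:: (-1); 1; 0; 8; 1; 1; 8; 0; (-1); 8; 1; 0; 1; 0; 1; 8; (-1); 0; 8; 1; 1; 8; 0; 1; (-8); 1; (-1); 0; 0; (-1); (-1); 8; (-8); (-1); 0; 1; 0; 1; (-8); 1; (-8); 0; 1; (-1); 0; 8; (-1); (-1); 0; 0; 0; (-6); 0; 0; 0; (-2); 0; 0; 0; 6; 0; 0; 0; (-6); 0; 0; 0; 0; 0; 0; 0; 0; 0; 0; (-8); 0; 0; 0; 0; 0; 0; 0; 0; 0; 0; (-8); 0; 0; 0; 0; 0; 0; 0; 0; 0; 0; 8; 0; 0; 0; 0; 0; 0; 0; 0; 0; 0; 0; 0; 0; 0; 0], (24, 0));
  ([:: 1; (-1); 12; 0; (-1); (-1); (-4); 0; 1; (-12); (-1); 8; (-1); 4; (-1); (-8); 0; (-8); (-8); 0; 0; (-8); 8; 0; 0; (-2); 2; 8; 8; 2; 2; (-8); 0; 0; 0; 0; 0; 0; 16; 0; 0; (-8); (-2); 2; 0; (-8); 2; 2; (-1); 0; 0; (-4); 1; 0; 2; 4; (-1); 0; 2; (-4); 1; 0; 0; 4; 0; 0; 0; 0; 0; 0; (-8); 0; 0; 0; 8; 0; 0; 0; 0; 0; 0; 8; 0; 0; 0; 8; 0; 0; 0; 0; 0; 0; 0; 0; 0; 0; 0; 0; 0; 0; 0; 0; 0; 0; 0; 0; 0; 0; 0; 0; 0; 0], (16, 0));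
  ([:: (-1); 1; 0; 8; 1; 1; 8; 0; (-1); 8; 1; (-12); 1; 0; 1; 20; (-1); 0; 20; 1; 1; 8; (-12); 1; (-8); 1; (-1); (-12); 0; (-1); (-1); 20; (-8); (-1); 12; 1; 0; 1; (-20); 1; (-8); 0; 4; (-4); 0; 8; (-4); (-4); 0; 0; 0; 6; 0; 0; 0; (-14); 0; 0; 0; 6; 0; 0; 0; (-6); 0; 0; (-12); 0; 0; 0; 12; 0; 0; 0; (-8); 0; 0; 0; 0; 0; 0; 0; 0; 0; 0; (-8); 0; 0; 0; 0; 0; 0; 0; 0; 0; 0; 8; 0; 0; 0; 0; 0; 0; 0; 0; 0; 0; 0; 0; 0; 0; 0], (24, 0));
  ([:: 3; 1; (-8); 0; (-3); 1; (-8); 0; (-2); 4; 2; 0; 2; 4; 2; 0; 0; 0; 0; 0; 0; 0; 0; 0; 4; 0; 0; 0; (-12); 0; 0; 0; 0; 0; 0; 0; 0; 0; 0; 0; 0; 0; 0; 0; 0; 0; 0; 0; 0; 0; 0; 0; (-4); 0; (-4); 0; 4; 0; (-4); 0; 0; 0; 0; 0; 0; 0; 0; 0; 0; 0; 0; 0; 0; 0; 0; 0; 0; 0; 0; 0; 0; 0; 0; 0; 0; 0; 0; 0; 0; 0; 0; 0; 0; 0; 0; 0; 0; 0; 0; 0; 0; 0; 0; 0; 0; 0; 0; 0; 0; 0; 0; 0], (24, 0));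
  ([:: 0; 0; (-12); 0; 0; 0; (-12); (-8); (-1); (-8); 3; 0; 5; (-8); 3; 0; (-1); 4; 0; (-9); (-3); 12; 0; (-9); (-4); (-2); 0; 0; (-28); (-2); 0; 0; 20; 3; 0; (-1); 12; 1; 0; (-1); 0; 0; 0; 0; 0; 0; 0; 0; 1; 2; 0; 0; (-5); 2; (-6); 0; 3; 0; (-6); 0; (-3); 0; 0; 0; 2; (-4); 0; 2; 2; 0; 0; 8; 0; 0; 0; 6; 0; 0; 0; 0; 0; 0; 0; 0; 0; 0; 0; 0; 0; 0; 0; 0; 0; 0; 0; 0; 0; 0; 0; 0; 0; 0; 0; 0; 0; 0; 0; 0; 0; 0; 0; 0], (48, 0));
  ([:: 0; 0; 4; 0; 0; 0; (-4); 0; 2; (-4); (-2); 8; (-2); 4; (-2); (-8); 0; 0; (-16); 0; 0; 0; 0; 0; 0; 1; (-1); 8; 0; (-1); (-1); (-8); 0; 0; (-8); 0; 0; 0; 8; 0; 0; 0; (-2); 2; 0; 0; 2; 2; (-1); (-2); 2; (-4); 1; 2; 2; 4; (-1); 0; 0; (-4); 1; 0; 0; 4; 0; 0; 8; 0; 0; 0; 0; 0; 0; 0; 8; 0; 0; 0; 0; 0; 0; 0; 0; 0; 0; 0; 0; 0; 0; 0; 0; 0; 0; 0; 0; 0; 0; 0; 0; 0; 0; 0; 0; 0; 0; 0; 0; 0; 0; 0; 0; 0], (16, 0));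
  ([:: 0; 0; 4; 0; 0; 0; 4; (-8); 3; 8; (-1); (-8); 1; 8; (-1); (-8); (-1); (-12); 0; (-1); (-3); (-4); 0; (-1); (-4); (-2); 0; 0; 4; (-2); 0; 0; 4; 3; 0; (-1); (-4); 1; 0; (-1); 0; 0; 0; 0; 0; 0; 0; 0; (-3); 2; 0; 4; (-1); 2; 2; 4; (-1); 0; 2; 4; 1; 0; 0; 4; 2; (-4); 0; 2; 2; 0; 0; 0; 0; 0; 0; (-2); 0; 0; 0; 0; 0; 0; 0; 0; 0; 0; 0; 0; 0; 0; 0; 0; 0; 0; 0; 0; 0; 0; 0; 0; 0; 0; 0; 0; 0; 0; 0; 0; 0; 0; 0; 0], (16, 0));
  ([:: 0; 0; (-12); 0; 0; 0; (-20); 0; (-2); (-4); (-6); 0; 2; 4; (-6); 0; 0; 0; 0; 0; 0; 0; 0; 0; 16; 1; (-1); 0; (-16); (-1); (-1); 0; 0; 0; 0; 0; 0; 0; 0; 0; 0; 0; 0; 0; 0; 0; 0; 0; 3; (-2); 2; 0; (-3); 2; 2; 0; 3; 0; 0; 0; (-3); 0; 0; 0; 0; 0; 0; 0; 0; 0; 0; 0; 0; 0; 0; 0; 0; 0; 0; 0; 0; 0; 0; 0; 0; 0; 0; 0; 0; 0; 0; 0; 0; 0; 0; 0; 0; 0; 0; 0; 0; 0; 0; 0; 0; 0; 0; 0; 0; 0; 0; 0], (48, 0));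
  ([:: (-3); (-5); (-12); 16; 3; (-5); (-12); 16; (-3); (-12); 3; 0; 3; (-12); 3; 0; 4; (-8); 0; (-4); (-4); (-8); 0; (-4); 0; 0; 0; 0; (-24); 0; 0; 0; 16; 0; 0; 0; 48; 0; 0; 0; 0; 0; 0; 0; 0; 0; 0; 0; 3; 0; 0; 0; (-3); 0; (-6); 0; 3; 0; (-6); 0; (-3); 0; 0; 0; 0; 0; 0; 0; 8; 0; 0; 8; (-8); 0; 0; 8; 0; 0; 0; 0; 0; 0; 0; 0; 0; 0; 0; 0; 0; 0; 0; 0; 0; 0; 0; 0; 0; 0; 0; 0; 0; 0; 0; 0; 0; 0; 0; 0; 0; 0; 0; 0], (48, 0));
  ([:: (-1); 1; 0; (-4); 1; 1; 8; 12; (-1); 8; 1; 0; 1; 0; 1; 8; (-1); 12; 8; 1; 1; (-4); 0; 1; (-8); 1; (-1); (-12); 0; (-1); (-1); (-4); (-8); 2; 0; (-2); 0; (-2); (-8); (-2); (-8); 12; 1; (-1); 0; (-4); (-1); (-1); 0; 0; 0; 6; 0; 0; 0; (-2); 0; 0; 0; (-6); 0; 0; 0; (-6); 0; 0; 0; 0; 0; 0; 0; 0; 0; 0; (-8); 0; 0; 0; 0; 0; 0; (-12); 0; 0; 0; 4; 0; 0; 0; 0; 0; 0; 0; 0; 0; 0; 8; 0; 0; 0; 0; 0; 0; 0; 0; 0; 0; 0; 0; 0; 0; 0], (24, 0));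
  ([:: (-3); (-5); 4; 0; 3; (-5); 4; 0; 1; (-20); (-1); 0; (-1); (-20); (-1); 0; 0; 0; 0; 0; 0; 0; 0; 0; 16; 0; 0; 0; 24; 0; 0; 0; 0; 0; 0; 0; 0; 0; 0; 0; 0; 0; 0; 0; 0; 0; 0; 0; 3; 0; 0; 0; 5; 0; 2; 0; (-5); 0; 2; 0; (-3); 0; 0; 0; 0; 0; 0; 0; 0; 0; 0; 0; 0; 0; 0; 0; 0; 0; 0; 0; 0; 0; 0; 0; 0; 0; 0; 0; 0; 0; 0; 0; 0; 0; 0; 0; 0; 0; 0; 0; 0; 0; 0; 0; 0; 0; 0; 0; 0; 0; 0; 0], (48, 0));
  ([:: 0; 0; 0; (-12); 0; 0; 0; 4; (-4); (-8); 0; 0; (-4); (-8); 0; 0; 5; 16; 0; 3; 3; 0; 0; 3; 8; 4; 0; 0; 8; 4; 0; 0; (-4); (-6); 0; 2; (-12); (-2); 0; 2; 0; 0; 0; 0; 0; 0; 0; 0; 4; (-4); 0; 0; 4; (-4); 0; 0; 0; 0; 0; 0; 0; 0; 0; 0; (-4); 8; 0; (-4); (-4); 0; 0; (-4); 0; 0; 0; 0; 0; 0; 0; 0; 0; 0; 0; 0; 0; 0; 0; 0; 0; 0; 0; 0; 0; 0; 0; 0; 0; 0; 0; 0; 0; 0; 0; 0; 0; 0; 0; 0; 0; 0; 0; 0], (24, 0));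
  ([:: 0; 0; (-12); 0; 0; 0; 4; 0; 1; 8; 3; 0; (-1); (-8); 3; 0; 0; 0; 0; 0; 0; 0; 0; 0; 4; (-2); 2; 0; (-4); 2; 2; 0; 0; 0; 0; 0; 0; 0; 0; 0; 0; 0; 0; 0; 0; 0; 0; 0; 0; 4; (-4); 0; 0; (-4); (-4); 0; 0; 0; 0; 0; 0; 0; 0; 0; 0; 0; 0; 0; 0; 0; 0; 0; 0; 0; 0; 0; 0; 0; 0; 0; 0; 0; 0; 0; 0; 0; 0; 0; 0; 0; 0; 0; 0; 0; 0; 0; 0; 0; 0; 0; 0; 0; 0; 0; 0; 0; 0; 0; 0; 0; 0; 0], (24, 0));
  ([:: (-1); 1; 4; 0; 1; 1; 4; 0; 1; 4; (-1); 0; (-1); 4; (-1); 0; 0; 0; 0; 0; 0; 0; 0; 0; 0; 0; 0; 0; 8; 0; 0; 0; 0; 0; 0; 0; 0; 0; 0; 0; 0; 0; 0; 0; 0; 0; 0; 0; (-1); 0; 0; 0; 1; 0; 2; 0; (-1); 0; 2; 0; 1; 0; 0; 0; 0; 0; 0; 0; 0; 0; 0; 0; 0; 0; 0; 0; 0; 0; 0; 0; 0; 0; 0; 0; 0; 0; 0; 0; 0; 0; 0; 0; 0; 0; 0; 0; 0; 0; 0; 0; 0; 0; 0; 0; 0; 0; 0; 0; 0; 0; 0; 0], (16, 0));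
  ([:: 2; 0; 0; 4; 2; 0; 0; 4; 0; 0; 0; 0; 0; 0; 0; 0; 2; 0; 0; (-1); 0; 0; 0; (-1); 0; 0; 0; 0; 0; 0; 0; 0; (-4); 0; 0; (-2); 4; 0; 0; 2; 0; 0; 0; 0; 0; 0; 0; 0; 0; 0; 0; 0; 0; 0; 0; 0; 0; 0; 0; 0; 0; 0; 0; 0; (-2); 0; 0; 2; 0; 0; 0; 0; (-2); 0; 0; 2; 0; 0; 0; 0; 0; 0; 0; 0; 0; 0; 0; 0; 0; 0; 0; 0; 0; 0; 0; 0; 0; 0; 0; 0; 0; 0; 0; 0; 0; 0; 0; 0; 0; 0; 0; 0], (12, (-12)));
  ([:: (-6); 0; 0; 24; (-6); 0; 0; 0; 9; 24; (-3); (-24); 3; 24; (-3); 8; 1; (-36); 28; (-1); (-1); (-12); (-4); (-1); 0; (-6); 6; 0; 0; (-6); (-6); 0; 12; 9; 0; (-3); (-12); 3; 0; (-3); (-28); 0; (-8); (-6); 4; 0; (-4); (-6); (-3); 6; (-6); 0; (-3); 6; 6; 0; 3; 0; 0; 0; 3; 0; 0; 0; 6; (-12); 0; 6; 6; 0; 0; 0; 0; 0; 0; (-6); 0; 0; 0; 0; (-8); 0; 12; 2; (-4); 0; 0; 2; 0; 0; 0; 0; 0; 0; 0; 0; 0; 0; 0; 0; 0; 0; 0; 0; 0; 0; 0; 0; 0; 0; 0; 0], (48, 0));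
  ([:: (-2); 0; 12; (-4); (-2); 0; 4; (-4); 1; (-4); (-1); 0; (-1); 4; (-1); 0; (-3); 0; (-4); 1; (-1); 0; (-4); 1; 0; 1; (-1); 0; 0; (-1); (-1); 0; 4; 0; 0; 2; (-4); 0; 0; (-2); (-4); 0; 0; (-2); (-4); 0; 0; 2; (-1); (-2); 2; 0; 1; 2; 2; 0; (-1); 0; 0; 0; 1; 0; 0; 0; 2; 0; 0; (-2); 0; 0; 0; 0; 2; 0; 0; (-2); 0; 0; 0; 0; 0; 0; 0; 2; 0; 0; 0; (-2); 0; 0; 0; 0; 0; 0; 0; 0; 0; 0; 0; 0; 0; 0; 0; 0; 0; 0; 0; 0; 0; 0; 0; 0], (8, 24));
  ([:: (-6); 0; 0; 24; (-6); 0; 0; 0; 9; 24; (-3); 0; 3; 24; (-3); (-16); 1; (-36); 4; (-1); (-1); (-12); 20; (-1); 0; (-6); 6; 0; 0; (-6); (-6); 0; 12; 9; 0; (-3); (-12); 3; 0; (-3); (-28); 0; (-14); 0; 4; 0; 2; 0; (-3); 6; (-6); 0; (-3); 6; 6; 0; 3; 0; 0; 0; 3; 0; 0; 0; 6; (-12); 0; 6; 6; 0; 0; 0; 0; 0; 0; (-6); 0; 0; 0; 0; (-8); 0; 12; 2; (-4); 0; 0; 2; 0; 0; 0; 0; 0; 0; 0; 0; 0; 0; 0; 0; 0; 0; 0; 0; 0; 0; 0; 0; 0; 0; 0; 0], (48, 0));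
  ([:: 2; 0; 4; 0; 2; 0; 4; 0; 2; 0; (-1); 0; 0; 0; (-1); 0; 0; 0; 0; 0; 0; 0; 0; 0; (-4); 0; (-2); 0; 4; 0; 2; 0; 0; 0; 0; 0; 0; 0; 0; 0; 0; 0; 0; 0; 0; 0; 0; 0; (-2); 0; 2; 0; 0; 0; 0; 0; (-2); 0; 2; 0; 0; 0; 0; 0; 0; 0; 0; 0; 0; 0; 0; 0; 0; 0; 0; 0; 0; 0; 0; 0; 0; 0; 0; 0; 0; 0; 0; 0; 0; 0; 0; 0; 0; 0; 0; 0; 0; 0; 0; 0; 0; 0; 0; 0; 0; 0; 0; 0; 0; 0; 0; 0], (12, (-12)));
  ([:: 0; 0; 12; 0; 0; 0; 12; 8; 3; 12; (-3); 0; (-3); 12; (-3); 0; 1; (-8); 0; (-1); (-1); (-16); 0; (-1); 0; 0; 0; 0; 24; 0; 0; 0; (-16); 1; 0; (-9); (-8); (-1); 0; (-9); 0; 0; 0; 0; 0; 0; 0; 0; (-3); 0; 0; 0; 3; 0; 6; 0; (-3); 0; 6; 0; 3; 0; 0; 0; (-2); 0; 0; 8; 2; 0; 0; 2; 0; 0; 0; (-6); 0; 0; 0; 0; 0; 0; 0; 0; 0; 0; 0; 0; 0; 0; 0; 0; 0; 0; 0; 0; 0; 0; 0; 0; 0; 0; 0; 0; 0; 0; 0; 0; 0; 0; 0; 0], (48, 0));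
  ([:: 0; 0; (-4); 0; 0; 0; 4; 0; 0; 4; 0; (-8); 0; (-4); 0; 8; 0; 0; 8; 0; 0; 0; (-8); 0; 0; 1; (-1); (-8); 0; (-1); (-1); 8; 0; 0; 0; 0; 0; 0; (-16); 0; 0; 0; 2; (-2); 0; 0; (-2); (-2); (-1); 0; 0; 4; 1; 0; 0; (-4); 1; 0; 0; 4; (-1); 0; 0; (-4); 0; 0; 0; 0; 0; 0; 8; 0; 0; 0; (-8); 0; 0; 0; 0; 0; 0; 0; 0; 0; 0; 0; 0; 0; 0; 0; 0; 0; 0; 0; 0; 0; 0; 0; 0; 0; 0; 0; 0; 0; 0; 0; 0; 0; 0; 0; 0; 0], (16, 0));
  ([:: 0; 0; (-4); 0; 0; 0; (-4); 8; (-1); (-4); 1; 0; 1; (-4); 1; 0; 1; 8; 0; (-1); (-1); 0; 0; (-1); 0; 0; 0; (-8); (-8); 0; 0; (-8); 0; 1; 0; (-1); 8; (-1); 0; (-1); 0; 0; 0; 0; 0; 0; 0; 0; 1; 0; 0; 4; (-1); 0; (-2); 4; 1; 0; (-2); (-4); (-1); 0; 0; (-4); (-2); 0; 0; 0; 2; 0; 0; 2; 0; 0; 0; 2; 0; 0; 0; 0; 0; 0; 0; 0; 0; 0; 0; 0; 0; 0; 0; 0; 0; 0; 0; 0; 0; 0; 0; 0; 0; 0; 0; 0; 0; 0; 0; 0; 0; 0; 0; 0], (16, 0));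
  ([:: 0; 0; 12; 0; 0; 0; 20; 0; 4; 4; (-4); 0; (-4); (-4); (-4); 0; 0; 0; 0; 0; 0; 0; 0; 0; (-16); 1; (-9); 0; 16; (-1); (-9); 0; 0; 0; 0; 0; 0; 0; 0; 0; 0; 0; 0; 0; 0; 0; 0; 0; (-5); 0; 8; 0; 5; 0; 8; 0; (-3); 0; 0; 0; 3; 0; 0; 0; 0; 0; 0; 0; 0; 0; 0; 0; 0; 0; 0; 0; 0; 0; 0; 0; 0; 0; 0; 0; 0; 0; 0; 0; 0; 0; 0; 0; 0; 0; 0; 0; 0; 0; 0; 0; 0; 0; 0; 0; 0; 0; 0; 0; 0; 0; 0; 0], (48, 0));
  ([:: (-2); 0; 4; (-4); (-2); 0; 4; (-4); 1; 4; (-1); 0; (-1); 4; (-1); 0; (-3); (-4); 0; 1; (-1); (-4); 0; 1; 0; 0; 0; 0; 8; 0; 0; 0; 0; 0; 0; 0; (-8); 0; 0; 0; 0; 0; 0; 0; 0; 0; 0; 0; (-1); 0; 0; 0; 1; 0; 2; 0; (-1); 0; 2; 0; 1; 0; 0; 0; 2; 0; 0; 0; 0; 0; 0; (-2); 2; 0; 0; (-2); 0; 0; 0; 0; 0; 0; 0; 0; 0; 0; 0; 0; 0; 0; 0; 0; 0; 0; 0; 0; 0; 0; 0; 0; 0; 0; 0; 0; 0; 0; 0; 0; 0; 0; 0; 0], (8, 24));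
  ([:: 2; 0; 0; (-8); 2; 0; 0; 0; (-3); (-8); 1; 8; (-1); (-8); 1; 8; 1; 12; (-4); (-1); (-1); 4; (-4); (-1); 0; 2; (-2); (-8); 0; 2; 2; 8; (-4); (-3); 0; 1; 4; (-1); 0; 1; 4; 0; 4; (-2); 4; 0; 0; (-2); 1; (-2); 2; 4; 1; (-2); (-2); (-4); (-1); 0; 0; 4; (-1); 0; 0; (-4); (-2); 4; 0; (-2); (-2); 0; 0; 0; 0; 0; 0; 2; 0; 0; 0; 0; 0; 0; (-4); 2; 4; 0; 0; 2; 0; 0; 0; 0; 0; 0; 0; 0; 0; 0; 0; 0; 0; 0; 0; 0; 0; 0; 0; 0; 0; 0; 0; 0], (16, 0));
  ([:: (-2); 0; 0; 0; (-2); 0; 0; 0; (-2); 0; 0; 0; (-2); 0; 0; 0; 0; 0; 0; 0; 0; 0; 0; 0; 0; 0; 0; 0; 0; 0; 0; 0; 0; 0; 0; 0; 0; 0; 0; 0; 0; 0; 0; 0; 0; 0; 0; 0; 1; 0; 0; 0; 1; 0; 0; 0; 1; 0; 0; 0; 1; 0; 0; 0; 0; 0; 0; 0; 0; 0; 0; 0; 0; 0; 0; 0; 0; 0; 0; 0; 0; 0; 0; 0; 0; 0; 0; 0; 0; 0; 0; 0; 0; 0; 0; 0; 0; 0; 0; 0; 0; 0; 0; 0; 0; 0; 0; 0; 0; 0; 0; 0], (8, 24));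
  ([:: 0; 0; 12; 24; 0; 0; 12; (-16); 3; 12; (-3); 0; (-3); 12; (-3); 0; 1; (-32); 0; (-1); (-1); 8; 0; (-1); 0; 0; 0; 0; 24; 0; 0; 0; (-16); (-5); 0; (-3); (-8); 5; 0; (-3); 0; 0; 0; 0; 0; 0; 0; 0; (-3); 0; 0; 0; 3; 0; 6; 0; (-3); 0; 6; 0; 3; 0; 0; 0; (-2); 0; 0; 8; 2; 0; 0; 2; 0; 0; 0; (-6); 0; 0; 0; 0; 0; 0; 0; 0; 0; 0; 0; 0; 0; 0; 0; 0; 0; 0; 0; 0; 0; 0; 0; 0; 0; 0; 0; 0; 0; 0; 0; 0; 0; 0; 0; 0], (48, 0));
  ([:: 0; 0; 36; 0; 0; 0; (-4); 0; 4; (-20); (-4); 0; (-4); 20; (-4); 0; 0; 0; 0; 0; 0; 0; 0; 0; (-16); (-5); (-3); 0; 16; 5; (-3); 0; 0; 0; 0; 0; 0; 0; 0; 0; 0; 0; 0; 0; 0; 0; 0; 0; (-5); 0; 8; 0; 5; 0; 8; 0; (-3); 0; 0; 0; 3; 0; 0; 0; 0; 0; 0; 0; 0; 0; 0; 0; 0; 0; 0; 0; 0; 0; 0; 0; 0; 0; 0; 0; 0; 0; 0; 0; 0; 0; 0; 0; 0; 0; 0; 0; 0; 0; 0; 0; 0; 0; 0; 0; 0; 0; 0; 0; 0; 0; 0; 0], (48, 0));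
  ([:: 2; (-1); 0; 0; 0; (-1); 0; 0; 2; 4; 0; 0; 2; 4; 0; 0; 0; 0; 0; 0; 0; 0; 0; 0; (-4); (-2); 0; 0; (-4); (-2); 0; 0; 0; 0; 0; 0; 0; 0; 0; 0; 0; 0; 0; 0; 0; 0; 0; 0; (-2); 2; 0; 0; (-2); 2; 0; 0; 0; 0; 0; 0; 0; 0; 0; 0; 0; 0; 0; 0; 0; 0; 0; 0; 0; 0; 0; 0; 0; 0; 0; 0; 0; 0; 0; 0; 0; 0; 0; 0; 0; 0; 0; 0; 0; 0; 0; 0; 0; 0; 0; 0; 0; 0; 0; 0; 0; 0; 0; 0; 0; 0; 0; 0], (12, (-12)));
  ([:: 0; 0; (-12); (-24); 0; 0; (-12); 0; (-9); (-24); 3; 0; (-3); (-24); 3; 0; 8; 36; 0; 2; 4; 12; 0; 2; 12; 6; 0; 0; (-12); 6; 0; 0; (-12); (-9); 0; 3; 12; (-3); 0; 3; 0; 0; 0; 0; 0; 0; 0; 0; 9; (-6); 0; 0; 3; (-6); (-6); 0; 3; 0; (-6); 0; (-3); 0; 0; 0; (-6); 12; 0; (-6); (-6); 0; 0; 0; 0; 0; 0; 6; 0; 0; 0; 0; 0; 0; 0; 0; 0; 0; 0; 0; 0; 0; 0; 0; 0; 0; 0; 0; 0; 0; 0; 0; 0; 0; 0; 0; 0; 0; 0; 0; 0; 0; 0; 0], (24, 0));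
  ([:: 8; 0; (-36); 16; 8; 0; (-12); 16; (-20); 12; 4; 0; 4; (-12); 4; 0; 4; 0; 16; (-4); (-4); 0; 16; (-4); 0; (-3); 3; 0; 0; 3; 3; 0; (-16); 0; 0; (-8); 16; 0; 0; 8; 8; 0; 0; 8; 8; 0; 0; (-8); 3; 6; (-6); 0; (-3); (-6); (-6); 0; 3; 0; 0; 0; (-3); 0; 0; 0; (-8); 0; 0; 8; 0; 0; 0; 0; (-8); 0; 0; 8; 0; 0; 0; 0; 8; 0; 0; (-8); 8; 0; 0; 8; 0; 0; 0; 0; 0; 0; 0; 0; 0; 0; 0; 0; 0; 0; 0; 0; 0; 0; 0; 0; 0; 0; 0; 0], (48, 0));
  ([:: 8; 0; 4; (-24); 8; 0; 4; 0; (-9); (-24); 3; 48; (-3); (-24); 3; 16; (-7); 36; (-32); (-3); 3; 12; 0; (-3); (-4); 6; (-8); 0; 4; 6; 8; 0; (-12); (-9); 0; 3; 12; (-3); 0; 3; 8; 0; 12; (-4); 24; 0; 4; (-4); 1; (-6); 8; 0; 3; (-6); (-6); 0; (-5); 0; 2; 0; (-3); 0; 0; 0; (-6); 12; 0; (-6); (-6); 0; 0; 0; 0; 0; 0; 6; 0; 0; 0; 0; 8; 0; (-16); 8; 8; 0; 0; 8; 0; 0; 0; 0; 0; 0; 0; 0; 0; 0; 0; 0; 0; 0; 0; 0; 0; 0; 0; 0; 0; 0; 0; 0], (48, 0));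
  ([:: 0; 0; (-36); 0; 0; 0; (-12); 0; (-1); 12; 5; 0; 1; (-12); 5; 0; 0; 0; 0; 0; 0; 0; 0; 0; 0; (-3); 3; 0; 0; 3; 3; 0; 0; 0; 0; 0; 0; 0; 0; 0; 0; 0; 0; 0; 0; 0; 0; 0; 3; 6; (-6); 0; (-3); (-6); (-6); 0; 3; 0; 0; 0; (-3); 0; 0; 0; 0; 0; 0; 0; 0; 0; 0; 0; 0; 0; 0; 0; 0; 0; 0; 0; 0; 0; 0; 0; 0; 0; 0; 0; 0; 0; 0; 0; 0; 0; 0; 0; 0; 0; 0; 0; 0; 0; 0; 0; 0; 0; 0; 0; 0; 0; 0; 0], (24, 0));
  ([:: (-9); 1; (-12); 16; 9; 1; (-12); 16; (-3); (-12); 3; 0; 3; (-12); 3; 0; 4; 16; 0; (-4); (-4); 16; 0; (-4); 0; 0; 0; 0; (-24); 0; 0; 0; (-8); 0; 0; 0; 24; 0; 0; 0; 0; 0; 0; 0; 0; 0; 0; 0; 3; 0; 0; 0; (-3); 0; (-6); 0; 3; 0; (-6); 0; (-3); 0; 0; 0; 0; 0; 0; 0; 8; 0; 0; 8; (-8); 0; 0; 8; 0; 0; 0; 0; 0; 0; 0; 0; 0; 0; 0; 0; 0; 0; 0; 0; 0; 0; 0; 0; 0; 0; 0; 0; 0; 0; 0; 0; 0; 0; 0; 0; 0; 0; 0; 0], (48, 0));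
  ([:: 2; (-2); 0; (-4); (-2); (-2); (-16); (-12); 2; (-16); (-2); 12; (-2); 0; (-2); (-28); 2; (-12); (-28); (-2); (-2); (-4); 12; (-2); 16; (-2); 2; 24; 0; 2; 2; (-16); 16; (-1); (-12); 1; 0; 1; 28; 1; 16; (-12); (-5); 5; 0; (-4); 5; 5; 0; 0; 0; (-6); 0; 0; 0; 10; 0; 0; 0; (-6); 0; 0; 0; 18; 0; 0; 12; 0; 0; 0; (-12); 0; 0; 0; 16; 0; 0; 0; 0; 0; 0; 12; 0; 0; 0; 4; 0; 0; 0; 0; 0; 0; 0; 0; 0; 0; (-16); 0; 0; 0; 0; 0; 0; 0; 0; 0; 0; 0; 0; 0; 0; 0], (24, 0));
  ([:: (-9); 1; 4; 0; 9; 1; 4; 0; 1; 4; (-1); 0; (-1); 4; (-1); 0; 0; 0; 0; 0; 0; 0; 0; 0; (-8); 0; 0; 0; 0; 0; 0; 0; 0; 0; 0; 0; 0; 0; 0; 0; 0; 0; 0; 0; 0; 0; 0; 0; 3; 0; 0; 0; 5; 0; 2; 0; (-5); 0; 2; 0; (-3); 0; 0; 0; 0; 0; 0; 0; 0; 0; 0; 0; 0; 0; 0; 0; 0; 0; 0; 0; 0; 0; 0; 0; 0; 0; 0; 0; 0; 0; 0; 0; 0; 0; 0; 0; 0; 0; 0; 0; 0; 0; 0; 0; 0; 0; 0; 0; 0; 0; 0; 0], (48, 0));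
  ([:: 0; 0; (-12); 24; 0; 0; (-12); 16; (-1); (-8); 3; 0; 5; (-8); 3; 0; (-7); 4; 0; (-3); 3; 12; 0; (-3); (-4); (-2); 0; 0; (-28); (-2); 0; 0; (-4); 3; 0; (-1); 36; 1; 0; (-1); 0; 0; 0; 0; 0; 0; 0; 0; 1; 2; 0; 0; (-5); 2; (-6); 0; 3; 0; (-6); 0; (-3); 0; 0; 0; 2; (-4); 0; 2; 2; 0; 0; 8; 0; 0; 0; 6; 0; 0; 0; 0; 0; 0; 0; 0; 0; 0; 0; 0; 0; 0; 0; 0; 0; 0; 0; 0; 0; 0; 0; 0; 0; 0; 0; 0; 0; 0; 0; 0; 0; 0; 0; 0], (48, 0));
  ([:: 0; 0; 12; 0; 0; 0; 4; 0; (-8); (-4); 0; 0; 8; 4; 0; 0; 0; 0; 0; 0; 0; 0; 0; 0; (-8); 1; (-1); 0; 8; (-1); (-1); 0; 0; 0; 0; 0; 0; 0; 0; 0; 0; 0; 0; 0; 0; 0; 0; 0; 3; (-2); 2; 0; (-3); 2; 2; 0; 3; 0; 0; 0; (-3); 0; 0; 0; 0; 0; 0; 0; 0; 0; 0; 0; 0; 0; 0; 0; 0; 0; 0; 0; 0; 0; 0; 0; 0; 0; 0; 0; 0; 0; 0; 0; 0; 0; 0; 0; 0; 0; 0; 0; 0; 0; 0; 0; 0; 0; 0; 0; 0; 0; 0; 0], (48, 0));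
  ([:: 2; 2; (-12); 0; (-2); 2; (-12); 0; (-3); (-12); 3; 0; 3; (-12); 3; 0; 0; 0; 0; 0; 0; 0; 0; 0; 0; 0; 0; 0; (-24); 0; 0; 0; 0; 0; 0; 0; 0; 0; 0; 0; 0; 0; 0; 0; 0; 0; 0; 0; 3; 0; 0; 0; (-3); 0; (-6); 0; 3; 0; (-6); 0; (-3); 0; 0; 0; 0; 0; 0; 0; 0; 0; 0; 0; 0; 0; 0; 0; 0; 0; 0; 0; 0; 0; 0; 0; 0; 0; 0; 0; 0; 0; 0; 0; 0; 0; 0; 0; 0; 0; 0; 0; 0; 0; 0; 0; 0; 0; 0; 0; 0; 0; 0; 0], (24, 0));
  ([:: (-2); 0; 0; (-4); (-2); 0; 0; (-4); 0; 0; 0; 0; 0; 0; 0; 0; 1; 0; 0; 1; 3; 0; 0; 1; 0; 0; 0; 0; 0; 0; 0; 0; 4; 0; 0; 2; (-4); 0; 0; (-2); 0; 0; 0; 0; 0; 0; 0; 0; 0; 0; 0; 0; 0; 0; 0; 0; 0; 0; 0; 0; 0; 0; 0; 0; 2; 0; 0; (-2); 0; 0; 0; 0; 2; 0; 0; (-2); 0; 0; 0; 0; 0; 0; 0; 0; 0; 0; 0; 0; 0; 0; 0; 0; 0; 0; 0; 0; 0; 0; 0; 0; 0; 0; 0; 0; 0; 0; 0; 0; 0; 0; 0; 0], (24, (-24)));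
  ([:: 0; 0; 0; 0; 0; 0; 0; 0; 0; 0; 0; (-12); 0; 0; 0; (-4); (-2); 0; 4; 2; 2; 0; (-4); 2; 0; 0; 0; 0; 0; 0; 0; 0; 0; 0; 0; 0; 0; 0; 0; 0; 8; 0; 1; 3; (-8); 0; (-1); 3; 0; 0; 0; 0; 0; 0; 0; 0; 0; 0; 0; 0; 0; 0; 0; 0; 0; 0; 0; 0; 0; 0; 0; 0; 0; 0; 0; 0; 0; 0; 0; 0; 4; 0; 0; (-4); (-4); 0; 0; (-4); 0; 0; 0; 0; 0; 0; 0; 0; 0; 0; 0; 0; 0; 0; 0; 0; 0; 0; 0; 0; 0; 0; 0; 0], (24, 0));
  ([:: (-2); 0; (-4); 0; (-2); 0; (-4); 0; 1; 0; 1; 0; 3; 0; 1; 0; 0; 0; 0; 0; 0; 0; 0; 0; 4; 0; 2; 0; (-4); 0; (-2); 0; 0; 0; 0; 0; 0; 0; 0; 0; 0; 0; 0; 0; 0; 0; 0; 0; 2; 0; (-2); 0; 0; 0; 0; 0; 2; 0; (-2); 0; 0; 0; 0; 0; 0; 0; 0; 0; 0; 0; 0; 0; 0; 0; 0; 0; 0; 0; 0; 0; 0; 0; 0; 0; 0; 0; 0; 0; 0; 0; 0; 0; 0; 0; 0; 0; 0; 0; 0; 0; 0; 0; 0; 0; 0; 0; 0; 0; 0; 0; 0; 0], (24, (-24)));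
  ([:: 0; 0; 0; (-12); 0; 0; 0; (-4); 0; 0; 0; 0; 0; 0; 0; 0; (-2); 4; 0; 2; 2; (-4); 0; 2; 0; 0; 0; 0; 0; 0; 0; 0; 8; 1; 0; 3; (-8); (-1); 0; 3; 0; 0; 0; 0; 0; 0; 0; 0; 0; 0; 0; 0; 0; 0; 0; 0; 0; 0; 0; 0; 0; 0; 0; 0; 4; 0; 0; (-4); (-4); 0; 0; (-4); 0; 0; 0; 0; 0; 0; 0; 0; 0; 0; 0; 0; 0; 0; 0; 0; 0; 0; 0; 0; 0; 0; 0; 0; 0; 0; 0; 0; 0; 0; 0; 0; 0; 0; 0; 0; 0; 0; 0; 0], (24, 0));
  ([:: 0; 0; (-12); 0; 0; 0; (-4); 0; (-2); 4; 2; 0; 2; (-4); 2; 0; 0; 0; 0; 0; 0; 0; 0; 0; 8; 1; 3; 0; (-8); (-1); 3; 0; 0; 0; 0; 0; 0; 0; 0; 0; 0; 0; 0; 0; 0; 0; 0; 0; 4; 0; (-4); 0; (-4); 0; (-4); 0; 0; 0; 0; 0; 0; 0; 0; 0; 0; 0; 0; 0; 0; 0; 0; 0; 0; 0; 0; 0; 0; 0; 0; 0; 0; 0; 0; 0; 0; 0; 0; 0; 0; 0; 0; 0; 0; 0; 0; 0; 0; 0; 0; 0; 0; 0; 0; 0; 0; 0; 0; 0; 0; 0; 0; 0], (24, 0));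
  ([:: 1; 1; 0; 0; 3; 1; 0; 0; (-2); (-4); 0; 0; (-2); (-4); 0; 0; 0; 0; 0; 0; 0; 0; 0; 0; 4; 2; 0; 0; 4; 2; 0; 0; 0; 0; 0; 0; 0; 0; 0; 0; 0; 0; 0; 0; 0; 0; 0; 0; 2; (-2); 0; 0; 2; (-2); 0; 0; 0; 0; 0; 0; 0; 0; 0; 0; 0; 0; 0; 0; 0; 0; 0; 0; 0; 0; 0; 0; 0; 0; 0; 0; 0; 0; 0; 0; 0; 0; 0; 0; 0; 0; 0; 0; 0; 0; 0; 0; 0; 0; 0; 0; 0; 0; 0; 0; 0; 0; 0; 0; 0; 0; 0; 0], (24, (-24)));
  ([:: 0; 0; 4; 8; 0; 0; 4; 0; 3; 8; (-1); 0; 1; 8; (-1); 0; (-1); (-12); 0; (-1); (-3); (-4); 0; (-1); (-4); (-2); 0; 0; 4; (-2); 0; 0; 4; 3; 0; (-1); (-4); 1; 0; (-1); 0; 0; 0; 0; 0; 0; 0; 0; (-3); 2; 0; 0; (-1); 2; 2; 0; (-1); 0; 2; 0; 1; 0; 0; 0; 2; (-4); 0; 2; 2; 0; 0; 0; 0; 0; 0; (-2); 0; 0; 0; 0; 0; 0; 0; 0; 0; 0; 0; 0; 0; 0; 0; 0; 0; 0; 0; 0; 0; 0; 0; 0; 0; 0; 0; 0; 0; 0; 0; 0; 0; 0; 0; 0], (16, 0));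
  ([:: 0; 0; 12; 0; 0; 0; 4; 0; 2; (-4); (-2); 0; (-2); 4; (-2); 0; 0; 0; 0; 0; 0; 0; 0; 0; 0; 1; (-1); 0; 0; (-1); (-1); 0; 0; 0; 0; 0; 0; 0; 0; 0; 0; 0; 0; 0; 0; 0; 0; 0; (-1); (-2); 2; 0; 1; 2; 2; 0; (-1); 0; 0; 0; 1; 0; 0; 0; 0; 0; 0; 0; 0; 0; 0; 0; 0; 0; 0; 0; 0; 0; 0; 0; 0; 0; 0; 0; 0; 0; 0; 0; 0; 0; 0; 0; 0; 0; 0; 0; 0; 0; 0; 0; 0; 0; 0; 0; 0; 0; 0; 0; 0; 0; 0; 0], (16, 0));
  ([:: 1; (-1); 4; 0; (-1); (-1); 4; 0; 1; 4; (-1); 0; (-1); 4; (-1); 0; 0; 0; 0; 0; 0; 0; 0; 0; 0; 0; 0; 0; 8; 0; 0; 0; 0; 0; 0; 0; 0; 0; 0; 0; 0; 0; 0; 0; 0; 0; 0; 0; (-1); 0; 0; 0; 1; 0; 2; 0; (-1); 0; 2; 0; 1; 0; 0; 0; 0; 0; 0; 0; 0; 0; 0; 0; 0; 0; 0; 0; 0; 0; 0; 0; 0; 0; 0; 0; 0; 0; 0; 0; 0; 0; 0; 0; 0; 0; 0; 0; 0; 0; 0; 0; 0; 0; 0; 0; 0; 0; 0; 0; 0; 0; 0; 0], (16, 0));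
  ([:: 0; 0; 0; 0; 0; 0; 0; 0; 0; 0; 0; 0; 0; 0; 0; 0; 0; 0; 0; 0; 0; 0; 0; 0; 0; 0; 0; 0; 0; 0; 0; 0; 0; 0; 0; 0; 0; 0; 0; 0; 0; 0; 0; 0; 0; 0; 0; 0; 0; 0; 0; 0; 0; 0; 0; 0; 0; 0; 0; 0; 0; 0; 0; 0; 0; 0; 0; 0; 0; 0; 0; 0; 0; 0; 0; 0; 0; 0; 0; 0; 0; 0; 0; 0; 0; 0; 0; 0; 0; 0; 0; 0; 0; 0; 0; 0; 0; 0; 0; 0; 0; 0; 0; 0; 0; 0; 0; 0; 0; 0; 0; 0], (1, 1))]).
Definition Z3 : seq (Z*Z*Z*Z) := [:: (1, 1, 0, 0); (1, 0, 1, 0); (1, 0, 0, 1); (0, 1, 1, 0); (0, 1, 0, 1); (0, 0, 1, 1); (1, 1, 1, 0); (1, 1, 0, 1); (1, 0, 1, 1); (0, 1, 1, 1)].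
Definition D3 : seq ((Z*Z*Z*Z) * 'I_4) := [:: ((1, 1, 0, 0), o0); ((1, 1, 0, 0), o1); ((1, 0, 1, 0), o0); ((1, 0, 1, 0), o2); ((1, 0, 0, 1), o0); ((1, 0, 0, 1), o3); ((0, 1, 1, 0), o1); ((0, 1, 1, 0), o2); ((0, 1, 0, 1), o1); ((0, 1, 0, 1), o3); ((0, 0, 1, 1), o2); ((0, 0, 1, 1), o3); ((1, 1, 1, 0), o0); ((1, 1, 1, 0), o1); ((1, 1, 1, 0), o2); ((1, 1, 0, 1), o0); ((1, 1, 0, 1), o1); ((1, 1, 0, 1), o3); ((1, 0, 1, 1), o0); ((1, 0, 1, 1), o2); ((1, 0, 1, 1), o3); ((0, 1, 1, 1), o1); ((0, 1, 1, 1), o2); ((0, 1, 1, 1), o3)].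
Definition cs3 : seq cert := ([:: ([:: (-1); 0; 0; 0; (-1); 1; 0; 0; 0; 1; 0; 0; 0; 0; 0; 1; 0; (-1); 0; 0; 0; 0; 0; 0; 0; 0; 0; 0; 0; 0; 0; 0; 0; 0], (3, 3));
  ([:: 1; 0; (-1); 1; 2; (-2); 0; 1; 0; (-2); (-1); 2; 1; 0; (-1); (-2); 0; 2; 0; 0; 0; 0; 0; 0; 0; 0; 0; 0; 0; 0; 0; 0; 0; 0], (3, (-3)));
  ([:: 1; 0; 2; (-2); (-1); 1; 0; (-2); 0; 1; 2; (-1); (-2); 0; 2; 1; 0; (-1); 0; 0; 0; 0; 0; 0; 0; 0; 0; 0; 0; 0; 0; 0; 0; 0], (3, (-3)));
  ([:: (-1); 0; (-1); 1; 0; 0; 0; 1; 0; 0; 0; 0; 1; 0; (-1); 0; 0; 0; 0; 0; 0; 0; 0; 0; 0; 0; 0; 0; 0; 0; 0; 0; 0; 0], (3, 3));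
  ([:: 1; 1; (-1); 0; 2; (-2); 1; 0; (-1); 0; 0; 0; 1; (-1); 0; (-2); 0; 2; 0; 0; 0; 0; 0; 0; 0; 0; 0; 0; 0; 0; 0; 0; 0; 0], (3, (-3)));
  ([:: (-1); 1; (-1); 0; 0; 0; 0; 0; (-1); 0; 0; 0; 1; (-1); 0; 0; 0; 0; 0; 0; 0; 1; 0; 0; 0; 0; 0; 0; 0; 0; 0; 0; 0; 0], (1, 3));
  ([:: 1; 1; 1; (-2); 0; 0; 0; 0; 0; 0; 0; 0; (-1); (-1); 2; 0; 0; 0; 0; 0; 0; 0; 0; 0; 0; 0; 0; 0; 0; 0; 0; 0; 0; 0], (3, (-3)));
  ([:: 1; (-2); 2; 0; (-1); 1; (-2); 0; 2; 0; 0; 0; (-2); 2; 0; 1; 0; (-1); 0; 0; 0; 0; 0; 0; 0; 0; 0; 0; 0; 0; 0; 0; 0; 0], (3, (-3)));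
  ([:: 1; (-2); 1; 1; 0; 0; 0; 0; 0; 0; 0; 0; (-1); 2; (-1); 0; 0; 0; 0; 0; 0; 0; 0; 0; 0; 0; 0; 0; 0; 0; 0; 0; 0; 0], (3, (-3)));
  ([:: (-1); 1; (-1); 0; 0; 0; 1; 0; 0; 0; 0; 0; 1; (-1); 0; 0; 0; 0; 0; 0; 0; 0; 0; 0; 0; 0; 0; 0; 0; 0; 0; 0; 0; 0], (3, 3));
  ([:: 2; 0; 0; 0; 1; 0; 0; 0; 0; (-2); 0; 0; 0; 0; 0; (-2); 0; 2; 0; 0; 0; 0; 0; 0; 0; 0; 0; 0; 0; 0; 0; 0; 0; 0], (3, (-3)));
  ([:: 0; 0; (-1); 0; (-1); 0; 0; 0; 0; 0; 0; 0; 0; 0; 0; 0; 0; 0; 1; 0; 0; 0; 0; 0; 0; 0; 0; 0; 0; 0; 0; 0; 0; 0], (1, 3));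
  ([:: 2; 0; 1; 0; 0; 0; 0; (-2); 0; 0; 0; 0; (-2); 0; 2; 0; 0; 0; 0; 0; 0; 0; 0; 0; 0; 0; 0; 0; 0; 0; 0; 0; 0; 0], (3, (-3)));
  ([:: (-1); 0; 0; 0; (-1); 0; 0; 0; 0; 0; 0; 0; 0; 0; 0; 1; 0; 0; 0; 0; 0; 0; 0; 0; 0; 0; 0; 0; 0; 0; 0; 0; 0; 0], (1, 3));
  ([:: (-1); 0; (-1); 0; 0; 0; 0; 0; 0; 0; 0; 0; 1; 0; 0; 0; 0; 0; 0; 0; 0; 0; 0; 0; 0; 0; 0; 0; 0; 0; 0; 0; 0; 0], (1, 3));
  ([:: 1; 0; 2; 0; 0; 0; (-2); 0; 0; 0; 0; 0; (-2); 2; 0; 0; 0; 0; 0; 0; 0; 0; 0; 0; 0; 0; 0; 0; 0; 0; 0; 0; 0; 0], (3, (-3)));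
  ([:: (-1); 0; 0; 0; 1; 0; 0; 0; 0; 1; 0; 0; 0; 0; 0; 1; 0; (-1); 0; 0; 0; 0; 0; 0; 0; 0; 0; 0; 0; 0; 0; 0; 0; 0], (3, (-3)));
  ([:: (-1); 0; 1; 0; 0; 0; 0; 1; 0; 0; 0; 0; 1; 0; (-1); 0; 0; 0; 0; 0; 0; 0; 0; 0; 0; 0; 0; 0; 0; 0; 0; 0; 0; 0], (3, (-3)));
  ([:: 1; 0; (-1); 0; 0; 0; 1; 0; 0; 0; 0; 0; 1; (-1); 0; 0; 0; 0; 0; 0; 0; 0; 0; 0; 0; 0; 0; 0; 0; 0; 0; 0; 0; 0], (3, (-3)));
  ([:: 0; 0; 0; 0; 0; 0; 0; 0; 0; 0; 0; 0; 0; 0; 0; 0; 0; 0; 0; 0; 0; 0; 0; 0; 0; 0; 0; 0; 0; 0; 0; 0; 0; 0], (1, 1))]).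
Definition lamN : seq Z := [:: 2; 2; 2; 2; 0; 0; 0; 0; 0; 0; 0; 0; (-1); (-1); (-1); (-1); 0; 0; 0; 0; 0; 0; 0; 0; 0; 0; 0; 0].
Definition denN : Z := 4.
End Data.

Definition rows6 : seq (seq Z) := [seq [seq dmono4 q wi.1 wi.2 | q <- Lgen 6] | wi <- D112].
Definition rows3 : seq (seq Z) := [seq [seq dmono4 q wi.1 wi.2 | q <- Lgen 3] | wi <- D3]
   ++ [seq [seq mono4 q w | q <- Lgen 3] | w <- Z3].
Definition rowsN : seq (seq Z) := [seq [seq mono4 q w | q <- Lgen 3] | w <- Z28].

Definition GS (S : comNzRingType) (a b c d : S) : S :=
  a^+3 + b^+3 + c^+3 + d^+3 + 3%:R * (b*c*d + a*c*d + a*b*d + a*b*c)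
  - (a^+2*(b+c+d) + b^+2*(a+c+d) + c^+2*(a+b+d) + d^+2*(a+b+c)).

Definition wnth (w : Z * Z * Z * Z) (j : 'I_4) : Z := nth 0 [:: w.1.1.1; w.1.1.2; w.1.2; w.2] j.

Definition e1 : Z * Z * Z * Z := (1, 0, 0, 0)%R.

Lemma check6 : certs_ok (Lgen 6) rows6 83 cs6. Proof. by vm_compute. Qed.
Lemma check3 : certs_ok (Lgen 3) rows3 19 cs3. Proof. by vm_compute. Qed.
Lemma checkN : veq (Lgen 3) (comb lamN rowsN) (target denN 19 0 19). Proof. by vm_compute. Qed.
Lemma uniq6 : uniq (Lgen 6). Proof. by vm_compute. Qed.
Lemma uniq3 : uniq (Lgen 3). Proof. by vm_compute. Qed.
Lemma size6 : size (Lgen 6) = 84%N. Proof. by vm_compute. Qed.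
Lemma size3 : size (Lgen 3) = 20%N. Proof. by vm_compute. Qed.
Lemma d6_nz : all (fun x : cert => x.2.1 != 0) cs6. Proof. by vm_compute. Qed.
Lemma d3_nz : all (fun x : cert => x.2.1 != 0) cs3. Proof. by vm_compute. Qed.
Lemma sz_cs6 : size cs6 = 84%N. Proof. by vm_compute. Qed.
Lemma sz_cs3 : size cs3 = 20%N. Proof. by vm_compute. Qed.
Lemma unit6 : veq (Lgen 6) [seq mono4 q e1 | q <- Lgen 6] (unitv 83). Proof. by vm_compute. Qed.
Lemma unit3 : veq (Lgen 3) [seq mono4 q e1 | q <- Lgen 3] (unitv 19). Proof. by vm_compute. Qed.
Lemma GZ28 : all (fun w => GS (w.1.1.1 ^+ 2) (w.1.1.2 ^+ 2) (w.1.2 ^+ 2) (w.2 ^+ 2) == 0) Z28.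
Proof. by vm_compute. Qed.
Lemma GZ3 : all (fun w => GS w.1.1.1 w.1.1.2 w.1.2 w.2 == 0) Z3. Proof. by vm_compute. Qed.
Lemma Z3_01 : all (fun w => all (fun j => (wnth w j == 0) || (wnth w j == 1)) [:: o0; o1; o2; o3]) Z3.
Proof. by vm_compute. Qed.
Lemma D3_ok : all (fun wi => (wnth wi.1 wi.2 == 1) && (wi.1 \in Z3)) D3.
Proof. by vm_compute. Qed.

Section Main.
Variable R : realType.
Local Notation P := {mpoly R[4]}.
Local Notation zR := (@zR R).
Local Notation zptZ := (@zptZ R).

Lemma G_zR a b c d : G (zR a) (zR b) (zR c) (zR d) = zR (GS a b c d).
Proof.
have zRB : forall x y, zR (x - y) = zR x - zR y by move=> x y; rewrite zRD zRN.
by rewrite /G /GS !(zRB, zRD, zRM, zRX, zRn).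
Qed.

Lemma zR_neq0 z : z != 0 -> zR z != 0.
Proof.
move=> nz; rewrite /Submission.zR intr_eq0; apply: contra nz => /eqP h.
by rewrite -(int_of_ZK z) h.
Qed.

Lemma zptZ_nth w j : zptZ w j = zR (wnth w j).
Proof. by case: (ord4_cases j) => ->. Qed.

Lemma zptZ0 w : zptZ w o0 = zR w.1.1.1. Proof. by []. Qed.
Lemma zptZ1 w : zptZ w o1 = zR w.1.1.2. Proof. by []. Qed.
Lemma zptZ2 w : zptZ w o2 = zR w.1.2. Proof. by []. Qed.
Lemma zptZ3 w : zptZ w o3 = zR w.2. Proof. by []. Qed.

Lemma unit_eval (p : P) d k0 w : uniq (Lgen d) -> p \is d.-homog ->
  (k0 < size (Lgen d))%N -> veq (Lgen d) [seq mono4 q w | q <- Lgen d] (unitv k0) ->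
  p.@[zptZ w] = cf p (nth q0 (Lgen d) k0).
Proof.
move=> uL hp hk V; rewrite (homog_eval _ uL hp).
rewrite (eq_bigr (fun q => cf p q * zR (mono4 q w))); last by move=> q _; rewrite mono_zR.
by rewrite sum_dot (dot_veq _ V) dot_unit.
Qed.

Lemma scale_of (g f : P) d k0 (cs : seq cert) :
  uniq (Lgen d) -> g \is d.-homog -> f \is d.-homog -> (k0 < size (Lgen d))%N ->
  all (fun x : cert => x.2.1 != 0) cs -> size cs = size (Lgen d) ->
  (forall k, (k < size (Lgen d))%N ->
    zR (nth ([::], (0, 0)) cs k).2.1 * cf g (nth q0 (Lgen d) k) =
    zR (nth ([::], (0, 0)) cs k).2.2 * cf g (nth q0 (Lgen d) k0)) ->
  (forall k, (k < size (Lgen d))%N ->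
    zR (nth ([::], (0, 0)) cs k).2.1 * cf f (nth q0 (Lgen d) k) =
    zR (nth ([::], (0, 0)) cs k).2.2 * cf f (nth q0 (Lgen d) k0)) ->
  cf f (nth q0 (Lgen d) k0) = 1 ->
  g = cf g (nth q0 (Lgen d) k0) *: f.
Proof.
move=> uL hg hf hk0 nz sz Hg Hf f1.
apply: (homog_eq hg (rpredZ _ hf)) => q hq.
have hk : (index q (Lgen d) < size (Lgen d))%N by rewrite index_mem.
have Eq : q = nth q0 (Lgen d) (index q (Lgen d)) by rewrite nth_index.
rewrite /cf mcoeffZ -/(cf g q) -/(cf f q).
have hD : zR (nth ([::], (0, 0)) cs (index q (Lgen d))).2.1 != 0.
  apply: zR_neq0; move/allP: nz; apply; apply: mem_nth; by rewrite sz.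
apply: (mulfI hD).
have := Hg _ hk; have := Hf _ hk; rewrite -Eq f1 mulr1 => ef ->.
by rewrite mulrCA ef mulrC.
Qed.


Local Notation f := (g4sq R).

Lemma f_Z28 w : w \in Z28 -> f.@[zptZ w] = 0.
Proof.
move=> hw; rewrite g4sq_eval zptZ0 zptZ1 zptZ2 zptZ3 -!zRX G_zR.
by move/allP: GZ28 => /(_ w hw) /eqP ->; rewrite zR0.
Qed.

Lemma f_e1 : f.@[zptZ e1] = 1.
Proof. rewrite g4sq_eval zptZ0 zptZ1 zptZ2 zptZ3 -!zRX G_zR. by vm_compute. Qed.

Lemma f_P46 : P46 f.
Proof.
split; first exact: g4sq_homog.
by move=> x; rewrite g4sq_eval; apply: G_nonneg; apply: sqr_ge0.
Qed.

Lemma coeffs6 (p : P) : p \is 6.-homog -> (forall x, 0 <= p.@[x]) ->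
  (forall w, w \in Z28 -> p.@[zptZ w] = 0) ->
  forall k, (k < size (Lgen 6))%N ->
    zR (nth ([::], (0, 0)) cs6 k).2.1 * cf p (nth q0 (Lgen 6) k) =
    zR (nth ([::], (0, 0)) cs6 k).2.2 * cf p (nth q0 (Lgen 6) 83).
Proof.
move=> hp hpos hz.
apply: (solve_all (rows := rows6)); [by rewrite size6 | exact: check6 |].
apply: rowsD_ok => w i hwi; apply: (@grad0 R p 6 (zptZ w) i uniq6 hp); first by move=> t _; exact: hpos.
apply: hz; move: hwi; rewrite /D112 => /allpairsP [[w' i'] [hw' _ [-> _]]] //.
Qed.

Lemma core1 (g : P) : P46 g -> P46 (f - g) -> exists c, 0 <= c /\ g = c *: f.
Proof.
move=> [hg gpos] [_ hpos].
have gz : forall w, w \in Z28 -> g.@[zptZ w] = 0.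
  move=> w hw; have := hpos (zptZ w); rewrite mevalB f_Z28 // sub0r oppr_ge0 => h1.
  by apply/eqP; rewrite eq_le h1 gpos.
have hf := g4sq_homog R.
have f1 : cf f (nth q0 (Lgen 6) 83) = 1.
  by rewrite -(unit_eval uniq6 hf _ unit6) ?size6 // f_e1.
exists (cf g (nth q0 (Lgen 6) 83)); split.
  by rewrite -(unit_eval uniq6 hg _ unit6) ?size6.
apply: (scale_of uniq6 hg hf _ d6_nz) => //.
- exact: coeffs6.
- by apply: coeffs6 => //; [case: f_P46 | exact: f_Z28].
Qed.


Local Notation g4 := (g4 R).

Lemma g4_e1 : g4.@[zptZ e1] = 1.
Proof. rewrite g4_eval zptZ0 zptZ1 zptZ2 zptZ3 G_zR. by vm_compute. Qed.

Lemma g4_Z3 w : w \in Z3 -> g4.@[zptZ w] = 0.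
Proof.
move=> hw; rewrite g4_eval zptZ0 zptZ1 zptZ2 zptZ3 G_zR.
by move/allP: GZ3 => /(_ w hw) /eqP ->; rewrite zR0.
Qed.

Lemma Z3_nonneg w : w \in Z3 -> forall j, 0 <= zptZ w j.
Proof.
move=> hw j; rewrite zptZ_nth.
move/allP: Z3_01 => /(_ w hw) /allP /(_ j).
case: (ord4_cases j) => -> /(_ isT) /orP [] /eqP ->; by rewrite ?zR0 ?zR1 ?ler01.
Qed.

Lemma line_nonneg w i t : (w, i) \in D3 -> `|t| <= 1 -> forall j, 0 <= pt (zptZ w) i t j.
Proof.
move=> hwi ht j; move/allP: D3_ok => /(_ _ hwi) /andP [/eqP hi hw] /=.
rewrite /pt; case: (eqVneq j i) => [->|ne].
  rewrite zptZ_nth /= in hi *; rewrite hi zR1 mulr1.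
  by move: ht; rewrite ler_norml => /andP [h _]; lra.
by rewrite mulr0 addr0; apply: Z3_nonneg.
Qed.

Lemma coeffs3 (p : P) : p \is 3.-homog -> (forall x, (forall j, 0 <= x j) -> 0 <= p.@[x]) ->
  (forall w, w \in Z3 -> p.@[zptZ w] = 0) ->
  forall k, (k < size (Lgen 3))%N ->
    zR (nth ([::], (0, 0)) cs3 k).2.1 * cf p (nth q0 (Lgen 3) k) =
    zR (nth ([::], (0, 0)) cs3 k).2.2 * cf p (nth q0 (Lgen 3) 19).
Proof.
move=> hp hpos hz.
apply: (solve_all (rows := rows3)); [by rewrite size3 | exact: check3 |].
move=> r; rewrite mem_cat => /orP [].
  apply: rowsD_ok => w i hwi; apply: (@grad0 R p 3 (zptZ w) i uniq3 hp).
    by move=> t ht; apply: hpos; apply: line_nonneg.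
  by apply: hz; move/allP: D3_ok => /(_ _ hwi) /andP [].
apply: rowsV_ok => w hw; rewrite -(homog_eval _ uniq3 hp); exact: hz.
Qed.

Lemma core3 (g : P) : Pplus43 g -> Pplus43 (g4 - g) -> exists c, 0 <= c /\ g = c *: g4.
Proof.
move=> [hg gpos] [_ hpos].
have gz : forall w, w \in Z3 -> g.@[zptZ w] = 0.
  move=> w hw; have := hpos (zptZ w) (Z3_nonneg hw).
  rewrite mevalB g4_Z3 // sub0r oppr_ge0 => h1.
  by apply/eqP; rewrite eq_le h1 gpos //; apply: Z3_nonneg.
have hf := g4_homog R.
have f1 : cf g4 (nth q0 (Lgen 3) 19) = 1.
  by rewrite -(unit_eval uniq3 hf _ unit3) ?size3 // g4_e1.
exists (cf g (nth q0 (Lgen 3) 19)); split.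
  rewrite -(unit_eval uniq3 hg _ unit3) ?size3 //; apply: gpos => j.
  by rewrite zptZ_nth; case: (ord4_cases j) => ->; rewrite /= ?zR1 ?zR0.
apply: (scale_of uniq3 hg hf _ d3_nz) => //.
- exact: coeffs3.
- apply: coeffs3 => //; last exact: g4_Z3.
  by move=> x hx; rewrite g4_eval; apply: G_nonneg.
Qed.

Lemma notSOS : ~ Sigma46 f.
Proof.
move=> [s [hs E]].
have ev : forall x, f.@[x] = \sum_(q <- s) q.@[x] ^+ 2.
  move=> x; rewrite E raddf_sum; apply: eq_bigr => q _; exact: rmorphXn.
have hq : forall q, q \in s -> forall w, w \in Z28 -> q.@[zptZ w] = 0.
  move=> q hqs w hw; have := f_Z28 hw; rewrite ev => /eqP.
  rewrite psumr_eq0; last by move=> i _; apply: sqr_ge0.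
  move/allP => /(_ q hqs) /= /eqP /eqP; by rewrite sqrf_eq0 => /eqP.
have q0e : forall q, q \in s -> q.@[zptZ e1] = 0.
  move=> q hqs; have hq3 : q \is 3.-homog by move/allP: hs => /(_ q hqs).
  rewrite (unit_eval uniq3 hq3 _ unit3) ?size3 //.
  have := @solve_gen R (cf q) (Lgen 3) rowsN lamN denN 19 0 19.
  rewrite size3 => /(_ isT isT) H.
  have {H}H := H _ checkN.
  have : zR denN * cf q (nth q0 (Lgen 3) 19) = 0.
    rewrite H ?zR0 ?mul0r //.
    apply: rowsV_ok => w hw; rewrite -(homog_eval _ uniq3 hq3); exact: hq.
  by move/eqP; rewrite mulf_eq0 (negbTE (zR_neq0 _)) //= => /eqP.
have := f_e1; rewrite ev big_seq big1 => [|q hqs]; last by rewrite q0e // expr0n.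
by move/eqP; rewrite eq_sym oner_eq0.
Qed.

End Main.

Theorem theorem2p10 (R : realType) :
  (extremal (@P46 R) (g4sq R) /\ ~ Sigma46 (g4sq R)) /\
  extremal (@Pplus43 R) (g4 R).
Proof.
have fnz : g4sq R != 0.
  apply/eqP => h; have := f_e1 R; rewrite h meval0 => /eqP; by rewrite eq_sym oner_eq0.
have gnz : g4 R != 0.
  apply/eqP => h; have := g4_e1 R; rewrite h meval0 => /eqP; by rewrite eq_sym oner_eq0.
have g4P : Pplus43 (g4 R).
  split; first exact: g4_homog.
  by move=> x hx; rewrite g4_eval; apply: G_nonneg.
split; first split; last first.
- split => //; split => // g h hg hh E.
  have Eh : g4 R - g = h by rewrite E addrC addKr.
  have Eg : g4 R - h = g by rewrite E addrK.
  split; [apply: core3 => //; rewrite Eh | apply: core3 => //; rewrite Eg] => //.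
- exact: notSOS.
- split; first exact: f_P46.
  split => // g h hg hh E.
  have Eh : g4sq R - g = h by rewrite E addrC addKr.
  have Eg : g4sq R - h = g by rewrite E addrK.
  split; [apply: core1 => //; rewrite Eh | apply: core1 => //; rewrite Eg] => //.
Qed.
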